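(* For every integer $L \geq 2$, $\delta_{3D}(L) = 2L^3 - 2$. That is, the minimum number of links needed to rigidify an $L\times L\times L$ prismatic assembly (i.e. to make its infinitesimal degrees of freedom equal to $6$) is exactly $2L^3-2$.
   Context: An $L\times M\times N$ prismatic assembly ($L,M,N$ positive integers) consists of $LMN$ solid cubes of side length $l>0$ occupying the cells of the $L\times M\times N$ cubic grid $[0,Ll]\times[0,Ml]\times[0,Nl]$. Each cube has its own $8$ vertices, so the configuration is described by $24LMN$ coordinates (vertices of different cubes are distinct variables even when they occupy the same grid point). A possible link is an unordered pair of vertices belonging to two distinct cubes that occupy the same grid point in the undeformed configuration; a link pattern is a set of such links. The constraints are: for each cube, the $12$ edge-length constraints $\|v_i-v_j\|^2-l^2=0$ for adjacent vertices $v_i,v_j$ of the cube, and the $6$ face-diagonal constraints $\|v_i-v_j\|^2-2l^2=0$ for opposite vertices $v_i,v_j$ of each face of the cube; and for each link joining vertices $v_i=(x_{3i-2},x_{3i-1},x_{3i})$ and $v_j=(x_{3j-2},x_{3j-1},x_{3j})$, the three constraints $x_{3i-2}-x_{3j-2}=0$, $x_{3i-1}-x_{3j-1}=0$, $x_{3i}-x_{3j}=0$. With $n$ links, the rigidity matrix $A$ is the $(18LMN+3n)\times 24LMN$ Jacobian matrix $A_{ij}=\partial g_i/\partial x_j$ of all these constraints $g_i$, evaluated at the undeformed grid configuration, and the (infinitesimal) degrees of freedom are $d = 24LMN - \operatorname{rank}(A)$. The assembly is rigidified by a link pattern if $d=6$. $\delta_{3D}(L,M,N)$ denotes the minimum number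 of links in a link pattern that rigidifies the $L\times M\times N$ assembly, and $\delta_{3D}(L):=\delta_{3D}(L,L,L)$. *)

(* Defs.v *)
From HB Require Import structures.
From mathcomp Require Import all_boot all_order all_algebra.
Set Implicit Arguments. Unset Strict Implicit. Unset Printing Implicit Defensive.
Import Order.TTheory GRing.Theory Num.Theory.
Local Open Scope ring_scope.

(* Cubes of the L x M x N assembly, indexed by the lower corner cell (a,b,c). *)
Definition cube (L M N : nat) := ('I_L * 'I_M * 'I_N)%type.
(* The 8 vertices of a cube, indexed by their offset in {0,1}^3. *)
Definition corner := ('I_2 * 'I_2 * 'I_2)%type.
(* A vertex variable: a vertex of a given cube (vertices of different cubes are
   distinct even if they coincide in space). *)
Definition vert (L M N : nat) := (cube L M N * corner)%type.
Definition coord (L M N : nat) := (vert L M N * 'I_3)%type.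

(* Grid point (in units of l) occupied by a vertex in the undeformed configuration. *)
Definition gridpt L M N (v : vert L M N) : nat * nat * nat :=
  let: ((a, b, c), (i, j, k)) := v in ((a + i)%N, (b + j)%N, (c + k)%N).

Definition gridax (p : nat * nat * nat) (ax : 'I_3) : nat :=
  let: (x, y, z) := p in
  if val ax == 0%N then x else if val ax == 1%N then y else z.

Definition pos (R : pzRingType) (l : R) L M N (v : vert L M N) (ax : 'I_3) : R :=
  l * (gridax (gridpt v) ax)%:R.

(* Row of the Jacobian of  ||u - w||^2 - c  at the undeformed configuration:
   d/dx_{u,ax} = 2 (u_ax - w_ax),  d/dx_{w,ax} = 2 (w_ax - u_ax). *)
Definition dist_row (R : pzRingType) (l : R) L M N (u w : vert L M N)
  : 'rV[R]_#|{: coord L M N}| :=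
  \row_j let: (v, ax) := enum_val j in
         if v == u then 2 * (pos l u ax - pos l w ax)
         else if v == w then 2 * (pos l w ax - pos l u ax)
         else 0.

(* Row of the Jacobian of the link constraint  x_{u,ax} - x_{w,ax} = 0. *)
Definition link_row (R : pzRingType) L M N (u w : vert L M N) (ax : 'I_3)
  : 'rV[R]_#|{: coord L M N}| :=
  \row_j if enum_val j == (u, ax) then 1
         else if enum_val j == (w, ax) then -1 else 0.

(* Number of coordinates in which two corners differ: 1 = cube edge,
   2 = diagonal of a face. *)
Definition hamming (p q : corner) : nat :=
  let: (p1, p2, p3) := p in let: (q1, q2, q3) := q in
  ((p1 != q1) + (p2 != q2) + (p3 != q3))%N.

(* Index 0..7 of a corner, used to order the two ends of a pair. *)
Definition corner_code (p : corner) : nat :=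
  let: (p1, p2, p3) := p in (4 * p1 + 2 * p2 + p3)%N.

Definition corner_even (p : corner) : bool :=
  let: (p1, p2, p3) := p in ~~ odd (p1 + p2 + p3).

(* The 18 constraints of each cube: unordered pairs {p,q} of corners
   (p < q) that are adjacent (12 edges), or opposite on a face, one diagonal
   per face (6 face diagonals): we take on each face the diagonal joining its
   two even-parity corners (these 6 diagonals form a regular tetrahedron). *)
Definition cube_rows (R : pzRingType) (l : R) L M N : seq 'rV[R]_#|{: coord L M N}| :=
  [seq dist_row l (c, pq.1) (c, pq.2)
  | c <- enum {: cube L M N},
    pq <- [seq pq <- enum {: corner * corner} |
             (corner_code pq.1 < corner_code pq.2)%N &&
             ((hamming pq.1 pq.2 == 1%N) ||
              ((hamming pq.1 pq.2 == 2%N) && corner_even pq.1))]].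

(* A link pattern is a set of unordered pairs of vertices. *)
Definition link_pattern L M N := {set {set vert L M N}}.

Definition valid_pattern L M N (P : link_pattern L M N) : Prop :=
  forall e, e \in P -> exists u w : vert L M N,
    e = [set u; w] /\ u.1 != w.1 /\ gridpt u = gridpt w.

Definition link_rows (R : pzRingType) L M N (e : {set vert L M N})
  : seq 'rV[R]_#|{: coord L M N}| :=
  match enum e with
  | [:: u; w] => [seq link_row R u w ax | ax <- enum 'I_3]
  | _ => [::]
  end.

Definition all_rows (R : pzRingType) (l : R) L M N (P : link_pattern L M N)
  : seq 'rV[R]_#|{: coord L M N}| :=
  cube_rows l L M N ++ flatten [seq link_rows R e | e <- enum P].

Definition rigidity_matrix (R : pzRingType) (l : R) L M N (P : link_pattern L M N)
  : 'M[R]_(size (all_rows l P), #|{: coord L M N}|) :=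
  \matrix_(i < size (all_rows l P)) nth 0 (all_rows l P) i.

Definition dof (R : fieldType) (l : R) L M N (P : link_pattern L M N) : nat :=
  (24 * L * M * N - \rank (rigidity_matrix l P))%N.

Definition rigidifies (R : fieldType) (l : R) L M N (P : link_pattern L M N) : Prop :=
  dof l P = 6%N.

Definition is_delta3D (R : fieldType) (l : R) (L M N n : nat) : Prop :=
  (exists P : link_pattern L M N, valid_pattern P /\ rigidifies l P /\ #|P| = n) /\
  (forall P : link_pattern L M N, valid_pattern P -> rigidifies l P -> (n <= #|P|)%N).

(* Main.v *)
Require Import Defs.
From HB Require Import structures.
From mathcomp Require Import all_boot all_order all_algebra.
From mathcomp Require Import zify ring lra.
Require Import Defs.
Set Implicit Arguments. Unset Strict Implicit. Unset Printing Implicit Defensive.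
Import Order.TTheory GRing.Theory Num.Theory.
Local Open Scope ring_scope.

Definition o0 : 'I_2 := @Ordinal 2 0 isT.
Definition o1 : 'I_2 := @Ordinal 2 1 isT.
Definition cp_pred (pq : corner * corner) : bool :=
  (corner_code pq.1 < corner_code pq.2)%N &&
             ((hamming pq.1 pq.2 == 1%N) ||
              ((hamming pq.1 pq.2 == 2%N) && corner_even pq.1)).


Lemma rank_from_kernel (F : fieldType) m n (A : 'M[F]_(m,n)) (G : 'M_(6,n)) :
  (forall x : 'rV_n, x *m A^T = 0 -> (x <= G)%MS) -> G *m A^T = 0 -> row_free G ->
  \rank A = (n - 6)%N.
Proof.
move=> Hk HG Hf.
have e : (kermx A^T == G)%MS.
  apply/andP; split.
    apply/row_subP => i; apply: Hk; by rewrite -row_mul mulmx_ker row0.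
  by rewrite sub_kermx HG.
have := eqmx_rank e; rewrite mxrank_ker mxrank_tr (eqP Hf) => h.
have := rank_leq_col A; lia.
Qed.

Lemma card_coord (L M N : nat) : #|{: coord L M N}| = (24 * L * M * N)%N.
Proof. rewrite !card_prod !card_ord. ring. Qed.

Lemma size_corner_pairs_le :
  (size [seq pq <- enum {: corner * corner} | cp_pred pq] <= 18)%N.
Proof.
set s := [seq pq <- _ | _].
have -> : 18%N = size [seq pq <- [seq (p, q) | p <- [:: (o0,o0,o0); (o0,o0,o1); (o0,o1,o0); (o0,o1,o1); (o1,o0,o0); (o1,o0,o1); (o1,o1,o0); (o1,o1,o1)],
                                             q <- [:: (o0,o0,o0); (o0,o0,o1); (o0,o1,o0); (o0,o1,o1); (o1,o0,o0); (o1,o0,o1); (o1,o1,o0); (o1,o1,o1)]] | cp_pred pq] by [].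
apply: uniq_leq_size; first by rewrite filter_uniq ?enum_uniq.
move=> [[[a b] c] [[d e] f]]; rewrite mem_filter => /andP [H _].
rewrite mem_filter H /=.
move: a b c d e f H.
by do 6! (case=> [[|[|//]]] ?); rewrite /cp_pred /=.
Qed.

Lemma size_cube_rows (R : pzRingType) (l : R) (L M N : nat) :
  (size (cube_rows l L M N) <= 18 * (L * M * N))%N.
Proof.
rewrite /cube_rows size_allpairs -cardE !card_prod !card_ord mulnC leq_mul2r.
by rewrite size_corner_pairs_le orbT.
Qed.

Lemma size_link_rows (R : pzRingType) (L M N : nat) (e : {set vert L M N}) :
  (size (link_rows R e) <= 3)%N.
Proof.
rewrite /link_rows; case: (enum e) => [|u [|w [|? ?]]] //=.
by rewrite size_map size_enum_ord.
Qed.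

Lemma size_all_rows (R : pzRingType) (l : R) (L M N : nat) (P : link_pattern L M N) :
  (size (all_rows l P) <= 18 * (L * M * N) + 3 * #|P|)%N.
Proof.
rewrite /all_rows size_cat; apply: leq_add; first exact: size_cube_rows.
rewrite size_flatten cardE.
elim: (enum P) => [|e s IH] //=.
rewrite mulnS; apply: leq_add => //; exact: size_link_rows.
Qed.

Lemma lower_bound (R : fieldType) (l : R) (L M N : nat) (P : link_pattern L M N) :
  rigidifies l P -> (2 * (L * M * N) - 2 <= #|P|)%N.
Proof.
rewrite /rigidifies /dof => h.
have h1 := rank_leq_row (rigidity_matrix l P).
have h2 := size_all_rows l P.
lia.
Qed.

Section Kernel.
Variables (R : fieldType) (L M N : nat).
Local Notation Nc := #|{: coord L M N}|.
Implicit Types (x : 'rV[R]_Nc).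

Definition Vx x (v : vert L M N) (ax : 'I_3) : R := x 0 (enum_rank (v, ax)).

Lemma dot_reindex x (r : 'rV[R]_Nc) :
  \sum_j x 0 j * r 0 j =
  \sum_(k : coord L M N) x 0 (enum_rank k) * r 0 (enum_rank k).
Proof.
rewrite (reindex (@enum_rank _)) //=.
by exists enum_val => k _; rewrite ?enum_rankK ?enum_valK.
Qed.

Lemma sum_coord (F : coord L M N -> R) :
  \sum_k F k = \sum_(v : vert L M N) \sum_(ax < 3) F (v, ax).
Proof. by rewrite pair_bigA; apply: eq_bigr => -[v ax]. Qed.

Lemma dot_dist x (l : R) (u w : vert L M N) : u != w ->
  \sum_j x 0 j * (dist_row l u w) 0 j =
  \sum_(ax < 3) 2 * (pos l u ax - pos l w ax) * (Vx x u ax - Vx x w ax).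
Proof.
move=> huw; rewrite dot_reindex.
under eq_bigr => k _ do rewrite mxE enum_rankK.
rewrite sum_coord /=.
rewrite (bigD1 u) //= (bigD1 w) /=; last by rewrite eq_sym.
rewrite [X in _ + (_ + X)]big1 ?addr0; last first.
  move=> v; case/andP=> hvu hvw; apply: big1 => ax _.
  by rewrite (negbTE hvu) (negbTE hvw) mulr0.
rewrite -big_split /=; apply: eq_bigr => ax _.
rewrite !eqxx (eq_sym w u) (negbTE huw) /Vx.
ring.
Qed.

Lemma dot_link x (u w : vert L M N) ax : u != w ->
  \sum_j x 0 j * (link_row R u w ax) 0 j = Vx x u ax - Vx x w ax.
Proof.
move=> huw; rewrite dot_reindex.
under eq_bigr => k _ do rewrite mxE enum_rankK.
rewrite (bigD1 (u, ax)) //= (bigD1 (w, ax)) /=; last first.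
  by rewrite xpair_eqE eqxx andbT eq_sym.
rewrite big1 ?addr0; last first.
  by move=> k /andP [h1 h2]; rewrite (negbTE h1) (negbTE h2) mulr0.
have hne : (w, ax) != (u, ax) by rewrite xpair_eqE eqxx andbT eq_sym.
rewrite eqxx (negbTE hne) eqxx /Vx; ring.
Qed.


Lemma ker_row x (l : R) (P : link_pattern L M N) r :
  x *m (rigidity_matrix l P)^T = 0 -> r \in all_rows l P ->
  \sum_j x 0 j * r 0 j = 0.
Proof.
move=> hx hr.
have hi : (index r (all_rows l P) < size (all_rows l P))%N by rewrite index_mem.
have := congr1 (fun m : 'rV_(size (all_rows l P)) => m 0 (Ordinal hi)) hx.
rewrite !mxE /=; under eq_bigr => j _ do rewrite !mxE /= nth_index //.
by [].
Qed.

Lemma cube_row_mem (l : R) (P : link_pattern L M N) (c : cube L M N) (p q : corner) :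
  cp_pred (p, q) -> dist_row l (c, p) (c, q) \in all_rows l P.
Proof.
move=> h; rewrite mem_cat; apply/orP; left.
apply/allpairsP; exists (c, (p, q)) => /=; split => //; first by rewrite mem_enum.
by rewrite mem_filter mem_enum andbT; exact: h.
Qed.

Lemma link_eq x (l : R) (P : link_pattern L M N) (u w : vert L M N) :
  x *m (rigidity_matrix l P)^T = 0 -> [set u; w] \in P -> u != w ->
  forall ax, Vx x u ax = Vx x w ax.
Proof.
move=> hx hP huw ax.
set e := [set u; w] in hP.
have he : size (enum e) = 2%N by rewrite -cardE cards2 huw.
have hmem : forall z, z \in enum e -> z = u \/ z = w.
  by move=> z; rewrite mem_enum => /set2P.
have hu : u \in enum e by rewrite mem_enum set21.
have hw : w \in enum e by rewrite mem_enum set22.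
have huq := enum_uniq (pred_of_set e).
case E : (enum e) he hmem hu hw huq => [|a [|b [|? ?]]] // _ hmem hu hw huq.
have hab : a != b by move: huq; rewrite /= inE andbT.
have hrow : link_row R a b ax \in all_rows l P.
  rewrite mem_cat; apply/orP; right; apply/flatten_mapP; exists e; first by rewrite mem_enum.
  by rewrite /link_rows E; apply: map_f; rewrite mem_enum.
have := ker_row hx hrow; rewrite dot_link // => /eqP; rewrite subr_eq0 => /eqP hv.
have hb' : b \in [:: a; b] by rewrite !inE eqxx orbT.
have [ha|ha] := hmem a (mem_head _ _); have [hb|hb] := hmem b hb'.
- by move: hab; rewrite ha hb eqxx.
- by rewrite -ha -hb.
- by rewrite -ha -hb.
- by move: hab; rewrite ha hb eqxx.
Qed.

End Kernel.

Definition a0 : 'I_3 := @Ordinal 3 0 isT.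
Definition a1 : 'I_3 := @Ordinal 3 1 isT.
Definition a2 : 'I_3 := @Ordinal 3 2 isT.

Definition pax (p : corner) (ax : 'I_3) : nat := gridax (val p.1.1, val p.1.2, val p.2) ax.

Section Cube.
Variable R : realFieldType.
Definition crs (w p : 'I_3 -> R) (ax : 'I_3) : R :=
  if val ax == 0%N then w a1 * p a2 - w a2 * p a1
  else if val ax == 1%N then w a2 * p a0 - w a0 * p a2
  else w a0 * p a1 - w a1 * p a0.

Lemma sum3 (F : 'I_3 -> R) : \sum_(i < 3) F i = F a0 + F a1 + F a2.
Proof. rewrite !big_ord_recr big_ord0 /= GRing.add0r. congr (_ + _ + _); apply: congr1; exact: val_inj. Qed.

Lemma ord3_cases (ax : 'I_3) : ax = a0 \/ ax = a1 \/ ax = a2.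
Proof. by case: ax => [[|[|[|//]]] h]; [left|right;left|right;right]; apply: val_inj. Qed.

Lemma ord2_cases (i : 'I_2) : i = o0 \/ i = o1.
Proof. by case: i => [[|[|//]] h]; [left|right]; apply: val_inj. Qed.

Variable V : corner -> 'I_3 -> R.
Hypothesis H : forall p q, cp_pred (p, q) ->
  \sum_(ax < 3) ((pax p ax)%:R - (pax q ax)%:R) * (V p ax - V q ax) = 0.

Definition ct (ax : 'I_3) : R := V (o0,o0,o0) ax.
Definition cw (ax : 'I_3) : R :=
  if val ax == 0%N then V (o0,o1,o0) a2 - V (o0,o0,o0) a2
  else if val ax == 1%N then - (V (o1,o0,o0) a2 - V (o0,o0,o0) a2)
  else V (o1,o0,o0) a1 - V (o0,o0,o0) a1.

Lemma cube_rigid p ax : V p ax = ct ax + crs cw (fun a => (pax p a)%:R) ax.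
Proof.
have h := fun p q hpq => H (p:=p) (q:=q) hpq.
have e1 := h (o0,o0,o0) (o0,o0,o1) isT.
have e2 := h (o0,o0,o0) (o0,o1,o0) isT.
have e3 := h (o0,o0,o0) (o1,o0,o0) isT.
have e4 := h (o0,o0,o0) (o0,o1,o1) isT.
have e5 := h (o0,o0,o0) (o1,o0,o1) isT.
have e6 := h (o0,o0,o0) (o1,o1,o0) isT.
have e7 := h (o0,o0,o1) (o0,o1,o1) isT.
have e8 := h (o0,o0,o1) (o1,o0,o1) isT.
have e9 := h (o0,o1,o0) (o0,o1,o1) isT.
have e10 := h (o0,o1,o0) (o1,o1,o0) isT.
have e11 := h (o0,o1,o1) (o1,o1,o1) isT.
have e12 := h (o1,o0,o0) (o1,o0,o1) isT.
have e13 := h (o1,o0,o0) (o1,o1,o0) isT.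
have e14 := h (o1,o0,o1) (o1,o1,o1) isT.
have e15 := h (o1,o1,o0) (o1,o1,o1) isT.
have e16 := h (o0,o1,o1) (o1,o0,o1) isT.
have e17 := h (o0,o1,o1) (o1,o1,o0) isT.
have e18 := h (o1,o0,o1) (o1,o1,o0) isT.
move: e1 e2 e3 e4 e5 e6 e7 e8 e9 e10 e11 e12 e13 e14 e15 e16 e17 e18; rewrite !sum3 /pax /= /ct /cw /crs /=.
case: p => [[i j] k].
case: (ord2_cases i) => ->; case: (ord2_cases j) => ->; case: (ord2_cases k) => ->;
  case: (ord3_cases ax) => [->|[->|->]] /=; move=> *; lra.
Qed.
End Cube.

Definition segb (R i : nat) : nat := if (R %% 2 == 1)%N && (R - 3 <= i)%N then (R - 3)%N else (i - i %% 2)%N.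
Definition segl (R i : nat) : nat := if (R %% 2 == 1)%N && (R - 3 <= i)%N then 3%N else 2%N.

Lemma seg_ok (R i j : nat) : (2 <= R)%N -> (i < R)%N -> (j < segl R i)%N ->
  [/\ segb R (segb R i + j) = segb R i, segl R (segb R i + j) = segl R i &
      (segb R i + j < R)%N].
Proof.
rewrite /segb /segl => h2 hi.
case: ifP => h1 hj.
  move/andP: h1 => [/eqP h1 h3].
  have -> : (R %% 2 == 1)%N && (R - 3 <= R - 3 + j)%N by apply/andP; split; [apply/eqP|]; lia.
  split => //; lia.
have h4 : ((R %% 2 == 1)%N && (R - 3 <= i - i %% 2 + j)%N) = false.
  move: h1; case: eqP => /= hR h1 //.
  apply/negbTE; rewrite -ltnNge; move/negbT: h1; rewrite -ltnNge => h1; lia.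
rewrite h4; split => //; lia.
Qed.
Lemma seg_in (R i : nat) : (2 <= R)%N -> (i < R)%N ->
  [/\ (segb R i <= i)%N, (i < segb R i + segl R i)%N, (segb R i + segl R i <= R)%N &
      (segl R i == 2) || (segl R i == 3)]%N.
Proof.
rewrite /segb /segl => h2 hi; case: ifP => h1.
  move/andP: h1 => [/eqP h1 h3]. split => //; lia.
split => //; lia.
Qed.
Definition cells_tab : seq (seq (nat * nat)) := [:: [:: (0,0); (1,0); (1,1); (0,1)];
  [:: (0,0); (1,0); (1,1); (1,2); (0,2); (0,1)];
  [:: (0,0); (1,0); (2,0); (2,1); (1,1); (0,1)];
  [:: (0,0); (1,0); (0,1)];
  [:: (2,0); (2,1); (2,2); (1,2); (0,2); (1,1)]].
Definition att_tab : seq (seq (nat * nat * nat)) := [:: [:: (0,1,0); (0,2,0); (0,1,2); (0,0,2)];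
  [:: (0,0,0); (0,2,1); (0,2,2); (0,1,2); (0,0,2); (0,0,1)];
  [:: (0,1,0); (0,2,1); (0,3,1); (0,3,2); (0,1,1); (0,1,2)];
  [:: (0,0,1); (0,1,0); (0,0,2)];
  [:: (0,3,1); (0,2,2); (0,3,2); (0,2,2); (0,0,3); (0,1,2)]].
Definition cyc_tab : seq (seq (nat * nat * nat)) := [:: [:: (1,1,0); (1,2,1); (1,1,2); (1,0,1)];
  [:: (1,1,0); (0,1,1); (1,2,2); (1,1,3); (1,1,2); (0,1,1)];
  [:: (1,1,0); (0,2,0); (1,3,1); (0,2,2); (1,1,2); (0,0,1)];
  [:: (1,1,0); (0,1,1); (1,1,1)];
  [:: (1,2,1); (1,3,2); (1,2,3); (0,1,3); (1,1,2); (0,2,1)]].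
Definition slen (s : nat) : nat := size (nth [::] cells_tab s).
Definition scell (s j : nat) : nat * nat := nth (0,0)%N (nth [::] cells_tab s) j.
Definition sidx (s du dv : nat) : nat := index (du,dv) (nth [::] cells_tab s).
Definition satt (s j : nat) : nat * nat * nat := nth (0,0,0)%N (nth [::] att_tab s) j.
Definition scyc (s j : nat) : nat * nat * nat := nth (0,0,0)%N (nth [::] cyc_tab s) j.
Definition nxt (s j : nat) : nat := if j.+1 == slen s then 0%N else j.+1.
Definition shape_of (lu lv du dv : nat) : nat :=
  if lu == 2%N then (if lv == 2%N then 0%N else 1%N)
  else if lv == 2%N then 2%N else if (du + dv <= 1)%N then 3%N else 4%N.

Definition corner_ok (c : nat * nat) (p : nat * nat) : bool :=
  (c.1 <= p.1 <= c.1.+1)%N && (c.2 <= p.2 <= c.2.+1)%N.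

Definition cell_check (lu lv s j : nat) : bool :=
  let c := scell s j in let c' := scell s (nxt s j) in
  let a := satt s j in let y := scyc s j in
  [&& (c.1 < lu)%N, (c.2 < lv)%N, shape_of lu lv c.1 c.2 == s, sidx s c.1 c.2 == j,
      c' != c, nxt s (nxt s j) != j, (nxt s j < slen s)%N,
      a.1.1 == 0%N, corner_ok c (a.1.2, a.2),
      (y.1.1 <= 1)%N, corner_ok c (y.1.2, y.2) & corner_ok c' (y.1.2, y.2)].

Definition fin_check : bool :=
  all (fun lu => all (fun lv => all (fun du => all (fun dv =>
    let s := shape_of lu lv du dv in
    [&& (sidx s du dv < slen s)%N, scell s (sidx s du dv) == (du,dv) &
        all (cell_check lu lv s) (iota 0 (slen s))])
    (iota 0 lv)) (iota 0 lu)) [:: 2; 3]%N) [:: 2; 3]%N.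

Lemma fin_check_ok : fin_check.
Proof. by []. Qed.

Lemma fin_lemma lu lv du dv : (lu == 2)%N || (lu == 3)%N -> (lv == 2)%N || (lv == 3)%N ->
  (du < lu)%N -> (dv < lv)%N ->
  let s := shape_of lu lv du dv in
  [/\ (sidx s du dv < slen s)%N, scell s (sidx s du dv) = (du,dv) &
      forall j, (j < slen s)%N -> cell_check lu lv s j].
Proof.
move=> hu hv hdu hdv s.
have := fin_check_ok; rewrite /fin_check.
have hlu : lu \in [:: 2; 3]%N by rewrite !inE.
have hlv : lv \in [:: 2; 3]%N by rewrite !inE.
move/allP/(_ _ hlu)/allP/(_ _ hlv)/allP/(_ du)/(_ _)/allP/(_ dv)/(_ _).
rewrite !mem_iota /= => /(_ hdu)/(_ hdv)/and3P [h1 /eqP h2 /allP h3].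
split => // j hj; apply: h3; rewrite mem_iota; exact: hj.
Qed.

Definition T3 := (nat * nat * nat)%type.
Section NatPat.
Variable L : nat.
Local Open Scope nat_scope.

Definition phase (c : T3) : nat :=
  let: (x, y, z) := c in if 2 <= x then 0 else if 2 <= y then 1 else if 1 <= z then 2 else 3.
Definition tuv (c : T3) : T3 :=
  let: (x, y, z) := c in if 2 <= x then (x, y, z) else if 2 <= y then (y, x, z) else (z, x, y).
Definition world (d t u v : nat) : T3 :=
  if d == 0 then (t, u, v) else if d == 1 then (u, t, v) else (u, v, t).
Definition pRu (d : nat) : nat := if d == 0 then L else 2.
Definition pRv (d : nat) : nat := if d <= 1 then L else 2.

Definition okD (d t u v : nat) : Prop :=
  [/\ d < 3, (if d == 2 then 1 else 2) <= t < L, u < pRu d & v < pRv d].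

Lemma dec_world d t u v : okD d t u v -> phase (world d t u v) = d /\ tuv (world d t u v) = (t, u, v).
Proof.
case=> hd /andP [h1 h2] hu hv; rewrite /phase /tuv /world.
case: d hd h1 hu hv => [|[|[|//]]] _ /= h1 hu hv.
- by rewrite h1.
- rewrite /pRu /= in hu; have -> : (2 <= u) = false by lia. by rewrite h1.
- rewrite /pRu /pRv /= in hu hv.
  have -> : (2 <= u) = false by lia. have -> : (2 <= v) = false by lia. by rewrite h1.
Qed.

Definition inb (c : T3) : bool := [&& c.1.1 < L, c.1.2 < L & c.2 < L].

Lemma world_dec c : inb c -> phase c < 3 ->
  okD (phase c) (tuv c).1.1 (tuv c).1.2 (tuv c).2 /\ c = world (phase c) (tuv c).1.1 (tuv c).1.2 (tuv c).2.
Proof.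
case: c => [[x y] z] /and3P [/= hx hy hz]; rewrite /phase /tuv /world /okD /pRu /pRv.
case: (leqP 2 x) => h1 /=; first by split => //; split => //; lia.
case: (leqP 2 y) => h2 /=; first by split => //; split => //; lia.
case: (leqP 1 z) => h3 /= //; split => //; split => //; lia.
Qed.

Definition U0 d u := segb (pRu d) u.
Definition V0 d v := segb (pRv d) v.
Definition SH d u v := shape_of (segl (pRu d) u) (segl (pRv d) v) (u - U0 d u) (v - V0 d v).
Definition KK d u v := sidx (SH d u v) (u - U0 d u) (v - V0 d v).

Definition bcells : seq T3 := [:: (1,0,0); (0,1,0); (1,1,0)].
Definition batt : seq T3 := [:: (1,0,0); (0,1,0); (1,1,0)].
Definition bcyc : seq T3 := [:: (1,1,1); (1,2,0); (2,1,1)].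
Definition bnxt (k : nat) : nat := if k.+1 == 3 then 0 else k.+1.

Definition parD d t u v : T3 := world d (t - 1) u v.
Definition attD d t u v : T3 :=
  let a := satt (SH d u v) (KK d u v) in world d (t + a.1.1) (U0 d u + a.1.2) (V0 d v + a.2).
Definition succD d t u v : T3 :=
  let cl := scell (SH d u v) (nxt (SH d u v) (KK d u v)) in world d t (U0 d u + cl.1) (V0 d v + cl.2).
Definition cycD d t u v : T3 :=
  let y := scyc (SH d u v) (KK d u v) in world d (t + y.1.1) (U0 d u + y.1.2) (V0 d v + y.2).

Definition lift3 (f : nat -> nat -> nat -> nat -> T3) (g : seq T3) (c : T3) : T3 :=
  if phase c < 3 then f (phase c) (tuv c).1.1 (tuv c).1.2 (tuv c).2
  else nth (0,0,0) g (index c bcells).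

Definition par := lift3 parD [:: (0,0,0); (0,0,0); (0,0,0)].
Definition attpt := lift3 attD batt.
Definition succ := lift3 succD [:: (0,1,0); (1,1,0); (1,0,0)].
Definition cycpt := lift3 cycD bcyc.
Definition mu (c : T3) : nat :=
  let t := (tuv c).1.1 in
  if phase c == 0 then 2 * L + t else if phase c == 1 then L + t else if phase c == 2 then t else 0.

Definition le1 (c X : T3) : bool :=
  [&& c.1.1 <= X.1.1 <= c.1.1.+1, c.1.2 <= X.1.2 <= c.1.2.+1 & c.2 <= X.2 <= c.2.+1].


Hypothesis hL : 2 <= L.

Lemma pR2 d : 2 <= pRu d /\ 2 <= pRv d.
Proof. by rewrite /pRu /pRv; case: (d == 0); case: (d <= 1). Qed.

Lemma piece_ok d t u v : okD d t u v ->
  let s := SH d u v in let k := KK d u v in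
  [/\ k < slen s, scell s k = (u - U0 d u, v - V0 d v) &
   forall j, j < slen s ->
     cell_check (segl (pRu d) u) (segl (pRv d) v) s j /\
     [/\ okD d t (U0 d u + (scell s j).1) (V0 d v + (scell s j).2),
         U0 d (U0 d u + (scell s j).1) = U0 d u,
         V0 d (V0 d v + (scell s j).2) = V0 d v,
         SH d (U0 d u + (scell s j).1) (V0 d v + (scell s j).2) = s &
         KK d (U0 d u + (scell s j).1) (V0 d v + (scell s j).2) = j]].
Proof.
case=> hd ht hu hv /=.
have [hRu hRv] := pR2 d.
have [su1 su2 su3 su4] := seg_in hRu hu.
have [sv1 sv2 sv3 sv4] := seg_in hRv hv.
have hdu : u - U0 d u < segl (pRu d) u by rewrite /U0; lia.
have hdv : v - V0 d v < segl (pRv d) v by rewrite /V0; lia.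
have [f1 f2 f3] := fin_lemma su4 sv4 hdu hdv.
split => // j hj; have hc := f3 j hj; split => //.
move: hc; rewrite /cell_check => /and4P [hc1 hc2 /eqP hc3 /and5P [/eqP hc4 _ _ _ _]].
have [g1 g2 g3] := seg_ok hRu hu hc1.
have [h1 h2 h3] := seg_ok hRv hv hc2.
rewrite /KK /SH /U0 /V0 in hc3 hc4 *.
rewrite g1 h1 g2 h2 !addKn hc3 hc4.
by split => //; split.
Qed.

Lemma le1_world d a b c a' b' c' :
  le1 (world d a b c) (world d a' b' c') =
  [&& a <= a' <= a.+1, b <= b' <= b.+1 & c <= c' <= c.+1].
Proof.
rewrite /le1 /world.
by case: ifP => _ /=; [|case: ifP => _ /=];
  case: (a <= a' <= a.+1); case: (b <= b' <= b.+1); case: (c <= c' <= c.+1).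
Qed.

Lemma world_inj d a b c a' b' c' : d < 3 ->
  (world d a b c == world d a' b' c') = [&& a == a', b == b' & c == c'].
Proof.
rewrite /world => hd.
by case: ifP => _ /=; [|case: ifP => _ /=]; rewrite !xpair_eqE;
  case: (a == a'); case: (b == b'); case: (c == c').
Qed.

Lemma lift3_pieceE f g c : phase c < 3 ->
  lift3 f g c = f (phase c) (tuv c).1.1 (tuv c).1.2 (tuv c).2.
Proof. by rewrite /lift3 => ->. Qed.

Lemma mu_eq x y z : mu (x, y, z) =
  if 2 <= x then 2 * L + x else if 2 <= y then L + y else if 1 <= z then z else 0.
Proof.
rewrite /mu /phase /tuv /=.
case: (leqP 2 x) => //= h1; case: (leqP 2 y) => //= h2; by case: (leqP 1 z).
Qed.

Lemma mu_par d t u v : okD d t u v -> mu (parD d t u v) < mu (world d t u v).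
Proof.
case=> hd /andP [h1 h2] hu hv.
rewrite /parD /world /pRu /pRv in hu hv *.
case: d hd h1 hu hv => [|[|[|//]]] _ /= h1 hu hv; rewrite !mu_eq;
  repeat (case: ifP => /=; [move=> ?|move/negbT => ?]); lia.
Qed.

Lemma okD_inb d t u v : okD d t u v -> inb (world d t u v).
Proof.
case=> hd /andP [_ k1] k2 k3; rewrite /inb /world /pRu /pRv in k2 k3 *.
by case: d hd => [|[|[|//]]] _ /= in k1 k2 k3 *; apply/and3P; split; lia.
Qed.

Lemma inb_par d t u v : okD d t u v -> inb (parD d t u v).
Proof.
case=> hd /andP [k0 k1] k2 k3; rewrite /parD /inb /world /pRu /pRv in k2 k3 *.
by case: d hd => [|[|[|//]]] _ /= in k0 k1 k2 k3 *; apply/and3P; split; lia.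
Qed.

Lemma piece_props d t u v : okD d t u v ->
  [/\ inb (parD d t u v), parD d t u v != world d t u v, le1 (world d t u v) (attD d t u v) & le1 (parD d t u v) (attD d t u v)] /\
  [/\ inb (succD d t u v), succD d t u v != world d t u v, le1 (world d t u v) (cycD d t u v) & le1 (succD d t u v) (cycD d t u v)].
Proof.
move=> hok.
have [f1 f2 f3] := piece_ok hok.
have [hcc [hok' _ _ _ _]] := f3 _ f1.
have hok0 := hok.
move: hok => [hd /andP [h1 h2] hu hv].
have [hRu hRv] := pR2 d.
have [su1 su2 su3 su4] := seg_in hRu hu.
have [sv1 sv2 sv3 sv4] := seg_in hRv hv.
move: hcc; rewrite /cell_check f2 => /and4P [_ _ _ /and5P [_ hnc hnn hnl /and4P [/eqP ha0 ha hy0 /andP [hy1 hy2]]]].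
have [_ [hokn _ _ _ _]] := f3 _ hnl.
rewrite /corner_ok /= in ha hy1 hy2.
split; split.
- exact: inb_par hok0.
- rewrite /parD world_inj // negb_and; apply/orP; left; apply/eqP.
  case: (d == 2) in h1; lia.
- rewrite /attD le1_world ha0 addn0 leqnn leqnSn /=.
  rewrite /U0 /V0 in ha *; apply/andP; split; lia.
- rewrite /parD /attD le1_world ha0 addn0.
  rewrite /U0 /V0 in ha *; apply/and3P; split; try (apply/andP; split); lia.
- exact: okD_inb hokn.
- rewrite /succD world_inj // eqxx /=; move: hnc.
  case: (scell _ (nxt _ _)) => a b /=.
  rewrite xpair_eqE negb_and => /orP [h|h]; apply/nandP; [left|right];
    move: h; apply: contra => /eqP h; apply/eqP; rewrite /U0 /V0 in h *; lia.
- rewrite /cycD le1_world /U0 /V0 in hy1 *; apply/and3P; split; try (apply/andP; split); lia.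
- rewrite /succD /cycD le1_world /U0 /V0 in hy2 *; apply/and3P; split; try (apply/andP; split); lia.
Qed.

Lemma phase3_cases c : inb c -> phase c = 3 -> c != (0,0,0) ->
  c = (1,0,0) \/ c = (0,1,0) \/ c = (1,1,0).
Proof.
case: c => [[x y] z] /and3P [/= hx hy hz]; rewrite /phase.
case: (leqP 2 x) => // h1; case: (leqP 2 y) => // h2; case: (leqP 1 z) => // h3 _.
case: x h1 {hx} => [|[|//]] _; case: y h2 {hy} => [|[|//]] _; case: z h3 {hz} => [|//] _ //= _; auto.
Qed.

Lemma valid_nat c : inb c -> c != (0,0,0) ->
  [/\ inb (par c), par c != c, le1 c (attpt c) & le1 (par c) (attpt c)] /\
  [/\ inb (succ c), succ c != c, le1 c (cycpt c) & le1 (succ c) (cycpt c)].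
Proof.
move=> hc h0.
case: (ltnP (phase c) 3) => hp.
  have [hok hw] := world_dec hc hp.
  rewrite /par /attpt /succ /cycpt !lift3_pieceE //.
  by have := piece_props hok; rewrite -hw.
have hp3 : phase c = 3 by move: hp; rewrite /phase; case: c {hc h0} => [[x y] z];
  do 3 case: ifP => //.
have hL' : 0 < L by lia.
by case: (phase3_cases hc hp3 h0) => [->|[->|->]];
  rewrite /par /attpt /succ /cycpt /lift3 /= /inb /=; repeat split => //; apply/and3P; split; lia.
Qed.

Lemma members d t u v j : okD d t u v -> j < slen (SH d u v) ->
  let s := SH d u v in
  let m := world d t (U0 d u + (scell s j).1) (V0 d v + (scell s j).2) in
  [/\ okD d t (U0 d u + (scell s j).1) (V0 d v + (scell s j).2),
      mu m = mu (world d t u v),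
      par m = world d (t - 1) (U0 d u + (scell s j).1) (V0 d v + (scell s j).2),
      attpt m = world d (t + (satt s j).1.1) (U0 d u + (satt s j).1.2) (V0 d v + (satt s j).2) &
      (succ m = world d t (U0 d u + (scell s (nxt s j)).1) (V0 d v + (scell s (nxt s j)).2) /\
       cycpt m = world d (t + (scyc s j).1.1) (U0 d u + (scyc s j).1.2) (V0 d v + (scyc s j).2))].
Proof.
move=> hok hj s m.
have [f1 f2 f3] := piece_ok hok.
have [_ [hokm e1 e2 e3 e4]] := f3 _ hj.
have [hpm htm] := dec_world hokm.
have [hpc htc] := dec_world hok.
have hd : d < 3 by case: hok.
have hpm3 : phase m < 3 by rewrite hpm.
rewrite /par /attpt /succ /cycpt !lift3_pieceE // hpm htm /=.
split => //.
- by rewrite /mu hpm htm hpc htc.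
- by rewrite /attD e1 e2 e3 e4.
- by rewrite /succD /cycD e1 e2 e3 e4.
Qed.

Lemma member_self d t u v : okD d t u v ->
  world d t (U0 d u + (scell (SH d u v) (KK d u v)).1) (V0 d v + (scell (SH d u v) (KK d u v)).2) =
  world d t u v.
Proof.
move=> hok; have [f1 f2 f3] := piece_ok hok.
case: hok => hd _ hu hv; have [hRu hRv] := pR2 d.
have [su1 _ _ _] := seg_in hRu hu. have [sv1 _ _ _] := seg_in hRv hv.
rewrite f2 /= /U0 /V0 !subnKC //.
Qed.

End NatPat.

Section Ord.
Variable K : nat.
Hypothesis hK : (0 < K)%N.
Lemma hL2 : (2 <= K.+1)%N. Proof. by rewrite ltnS. Qed.
Local Notation L := K.+1.
Local Notation cubeL := (cube L L L).

Definition nc (c : cubeL) : T3 := (val c.1.1, val c.1.2, val c.2).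
Definition oc (t : T3) : cubeL := (inord t.1.1, inord t.1.2, inord t.2).
Definition ocr (p : T3) : corner := (inord p.1.1, inord p.1.2, inord p.2).
Definition sub3 (X c : T3) : T3 := (X.1.1 - c.1.1, X.1.2 - c.1.2, X.2 - c.2)%N.
Definition mk_link (c d X : T3) : {set vert L L L} :=
  [set (oc c, ocr (sub3 X c)); (oc d, ocr (sub3 X d))].

Definition attL (c : cubeL) := mk_link (nc c) (par (nc c)) (attpt L (nc c)).
Definition cycL (c : cubeL) := mk_link (nc c) (succ L (nc c)) (cycpt L (nc c)).
Definition nonorg : {set cubeL} := [set c | nc c != (0,0,0)%N].
Definition Pat : link_pattern L L L := (attL @: nonorg) :|: (cycL @: nonorg).

Lemma nc_inb c : inb L (nc c).
Proof. by rewrite /inb /nc /= !ltn_ord. Qed.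

Lemma ncK c : oc (nc c) = c.
Proof. by case: c => [[x y] z]; rewrite /oc /nc /= !inord_val. Qed.

Lemma ocK t : inb L t -> nc (oc t) = t.
Proof.
case: t => [[x y] z] /and3P [/= hx hy hz].
by rewrite /oc /nc /= !inordK.
Qed.

Lemma gridpt_mk (t X : T3) : inb L t -> le1 t X -> gridpt (oc t, ocr (sub3 X t)) = X.
Proof.
case: t => [[x y] z]; case: X => [[a b] c] /and3P [/= hx hy hz] /and3P [/= /andP [h1 h2] /andP [h3 h4] /andP [h5 h6]].
rewrite /gridpt /oc /ocr /sub3 /= !inordK; try lia.
by congr (_, _, _); lia.
Qed.

Lemma oc_inj t t' : inb L t -> inb L t' -> oc t = oc t' -> t = t'.
Proof. by move=> h h' e; rewrite -(ocK h) -(ocK h') e. Qed.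

Lemma valid_mk (c d X : T3) : inb L c -> inb L d -> c != d -> le1 c X -> le1 d X ->
  exists u w : vert L L L, [/\ mk_link c d X = [set u; w], u.1 != w.1, gridpt u = gridpt w,
     u = (oc c, ocr (sub3 X c)) & w = (oc d, ocr (sub3 X d))].
Proof.
move=> hc hd hcd hX hX'; exists (oc c, ocr (sub3 X c)), (oc d, ocr (sub3 X d)); split => //.
  by apply: contra hcd => /eqP /(oc_inj hc hd) ->.
by rewrite (gridpt_mk hc hX) (gridpt_mk hd hX').
Qed.

Lemma Pat_valid : valid_pattern Pat.
Proof.
move=> e; rewrite inE => /orP [] /imsetP [c]; rewrite inE => h0 ->;
  have [[h1 h2 h3 h4] [h5 h6 h7 h8]] := valid_nat (L := L) hL2 (nc_inb c) h0.
- have h2' : nc c != par (nc c) by rewrite eq_sym.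
  have [u [w [e1 e2 e3 _ _]]] := valid_mk (nc_inb c) h1 h2' h3 h4.
  by exists u, w.
- have h6' : nc c != succ L (nc c) by rewrite eq_sym.
  have [u [w [e1 e2 e3 _ _]]] := valid_mk (nc_inb c) h5 h6' h7 h8.
  by exists u, w.
Qed.


Definition org : cubeL := oc (0,0,0)%N.

Lemma nc_org : nc org = (0,0,0)%N.
Proof. by rewrite ocK. Qed.

Lemma card_nonorg : #|nonorg| = (L * L * L).-1.
Proof.
have -> : nonorg = [set~ org].
  apply/setP => c; rewrite !inE; apply/idP/idP; apply: contra => /eqP e.
    by rewrite e nc_org.
  by rewrite -(ncK c) e.
by rewrite cardsC1 !card_prod !card_ord.
Qed.

Lemma card_Pat_le : (#|Pat| <= 2 * (L * L * L).-1)%N.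
Proof.
apply: leq_trans (leq_card_setU _ _) _.
rewrite mul2n -addnn -card_nonorg; apply: leq_add; exact: leq_imset_card.
Qed.

End Ord.

Section Pieces.
Variable R : realFieldType.
Definition pv (d : nat) (a : T3) : 'I_3 -> R := fun ax => (gridax (world d a.1.1 a.1.2 a.2) ax)%:R.
Local Notation crs := (@crs R).
Lemma pl_0_0 (F W : nat -> 'I_3 -> R) :
  (forall ax,F 0%N ax + crs (W 0%N) (pv 0 (0,1,0)%N) ax = 0) ->
  (forall ax,F 1%N ax + crs (W 1%N) (pv 0 (0,2,0)%N) ax = 0) ->
  (forall ax,F 2%N ax + crs (W 2%N) (pv 0 (0,1,2)%N) ax = 0) ->
  (forall ax,F 3%N ax + crs (W 3%N) (pv 0 (0,0,2)%N) ax = 0) ->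
  (forall ax, F 0%N ax + crs (W 0%N) (pv 0 (1, 1, 0)%N) ax = F 1%N ax + crs (W 1%N) (pv 0 (1, 1, 0)%N) ax) ->
  (forall ax, F 1%N ax + crs (W 1%N) (pv 0 (1, 2, 1)%N) ax = F 2%N ax + crs (W 2%N) (pv 0 (1, 2, 1)%N) ax) ->
  (forall ax, F 2%N ax + crs (W 2%N) (pv 0 (1, 1, 2)%N) ax = F 3%N ax + crs (W 3%N) (pv 0 (1, 1, 2)%N) ax) ->
  (forall ax, F 3%N ax + crs (W 3%N) (pv 0 (1, 0, 1)%N) ax = F 0%N ax + crs (W 0%N) (pv 0 (1, 0, 1)%N) ax) ->
  forall i, (i < 4)%N -> forall ax, W i ax = 0.
Proof.
move=> h0 h1 h2 h3 h4 h5 h6 h7.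
have [h0a [h0b h0c]] := (h0 a0, (h0 a1, h0 a2)); clear h0.
have [h1a [h1b h1c]] := (h1 a0, (h1 a1, h1 a2)); clear h1.
have [h2a [h2b h2c]] := (h2 a0, (h2 a1, h2 a2)); clear h2.
have [h3a [h3b h3c]] := (h3 a0, (h3 a1, h3 a2)); clear h3.
have [h4a [h4b h4c]] := (h4 a0, (h4 a1, h4 a2)); clear h4.
have [h5a [h5b h5c]] := (h5 a0, (h5 a1, h5 a2)); clear h5.
have [h6a [h6b h6c]] := (h6 a0, (h6 a1, h6 a2)); clear h6.
have [h7a [h7b h7c]] := (h7 a0, (h7 a1, h7 a2)); clear h7.
move: h0a h0b h0c h1a h1b h1c h2a h2b h2c h3a h3b h3c h4a h4b h4c h5a h5b h5c h6a h6b h6c h7a h7b h7c; rewrite /crs /pv /=.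
move=> h0a h0b h0c h1a h1b h1c h2a h2b h2c h3a h3b h3c h4a h4b h4c h5a h5b h5c h6a h6b h6c h7a h7b h7c.
case=> [|[|[|[|//]]]] // _ ax; case: (ord3_cases ax) => [->|[->|->]]; lra.
Qed.

Lemma pl_0_1 (F W : nat -> 'I_3 -> R) :
  (forall ax,F 0%N ax + crs (W 0%N) (pv 0 (0,0,0)%N) ax = 0) ->
  (forall ax,F 1%N ax + crs (W 1%N) (pv 0 (0,2,1)%N) ax = 0) ->
  (forall ax,F 2%N ax + crs (W 2%N) (pv 0 (0,2,2)%N) ax = 0) ->
  (forall ax,F 3%N ax + crs (W 3%N) (pv 0 (0,1,2)%N) ax = 0) ->
  (forall ax,F 4%N ax + crs (W 4%N) (pv 0 (0,0,2)%N) ax = 0) ->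
  (forall ax,F 5%N ax + crs (W 5%N) (pv 0 (0,0,1)%N) ax = 0) ->
  (forall ax, F 0%N ax + crs (W 0%N) (pv 0 (1, 1, 0)%N) ax = F 1%N ax + crs (W 1%N) (pv 0 (1, 1, 0)%N) ax) ->
  (forall ax, F 1%N ax + crs (W 1%N) (pv 0 (0, 1, 1)%N) ax = F 2%N ax + crs (W 2%N) (pv 0 (0, 1, 1)%N) ax) ->
  (forall ax, F 2%N ax + crs (W 2%N) (pv 0 (1, 2, 2)%N) ax = F 3%N ax + crs (W 3%N) (pv 0 (1, 2, 2)%N) ax) ->
  (forall ax, F 3%N ax + crs (W 3%N) (pv 0 (1, 1, 3)%N) ax = F 4%N ax + crs (W 4%N) (pv 0 (1, 1, 3)%N) ax) ->
  (forall ax, F 4%N ax + crs (W 4%N) (pv 0 (1, 1, 2)%N) ax = F 5%N ax + crs (W 5%N) (pv 0 (1, 1, 2)%N) ax) ->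
  (forall ax, F 5%N ax + crs (W 5%N) (pv 0 (0, 1, 1)%N) ax = F 0%N ax + crs (W 0%N) (pv 0 (0, 1, 1)%N) ax) ->
  forall i, (i < 6)%N -> forall ax, W i ax = 0.
Proof.
move=> h0 h1 h2 h3 h4 h5 h6 h7 h8 h9 h10 h11.
have [h0a [h0b h0c]] := (h0 a0, (h0 a1, h0 a2)); clear h0.
have [h1a [h1b h1c]] := (h1 a0, (h1 a1, h1 a2)); clear h1.
have [h2a [h2b h2c]] := (h2 a0, (h2 a1, h2 a2)); clear h2.
have [h3a [h3b h3c]] := (h3 a0, (h3 a1, h3 a2)); clear h3.
have [h4a [h4b h4c]] := (h4 a0, (h4 a1, h4 a2)); clear h4.
have [h5a [h5b h5c]] := (h5 a0, (h5 a1, h5 a2)); clear h5.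
have [h6a [h6b h6c]] := (h6 a0, (h6 a1, h6 a2)); clear h6.
have [h7a [h7b h7c]] := (h7 a0, (h7 a1, h7 a2)); clear h7.
have [h8a [h8b h8c]] := (h8 a0, (h8 a1, h8 a2)); clear h8.
have [h9a [h9b h9c]] := (h9 a0, (h9 a1, h9 a2)); clear h9.
have [h10a [h10b h10c]] := (h10 a0, (h10 a1, h10 a2)); clear h10.
have [h11a [h11b h11c]] := (h11 a0, (h11 a1, h11 a2)); clear h11.
move: h0a h0b h0c h1a h1b h1c h2a h2b h2c h3a h3b h3c h4a h4b h4c h5a h5b h5c h6a h6b h6c h7a h7b h7c h8a h8b h8c h9a h9b h9c h10a h10b h10c h11a h11b h11c; rewrite /crs /pv /=.
move=> h0a h0b h0c h1a h1b h1c h2a h2b h2c h3a h3b h3c h4a h4b h4c h5a h5b h5c h6a h6b h6c h7a h7b h7c h8a h8b h8c h9a h9b h9c h10a h10b h10c h11a h11b h11c.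
case=> [|[|[|[|[|[|//]]]]]] // _ ax; case: (ord3_cases ax) => [->|[->|->]]; lra.
Qed.

Lemma pl_0_2 (F W : nat -> 'I_3 -> R) :
  (forall ax,F 0%N ax + crs (W 0%N) (pv 0 (0,1,0)%N) ax = 0) ->
  (forall ax,F 1%N ax + crs (W 1%N) (pv 0 (0,2,1)%N) ax = 0) ->
  (forall ax,F 2%N ax + crs (W 2%N) (pv 0 (0,3,1)%N) ax = 0) ->
  (forall ax,F 3%N ax + crs (W 3%N) (pv 0 (0,3,2)%N) ax = 0) ->
  (forall ax,F 4%N ax + crs (W 4%N) (pv 0 (0,1,1)%N) ax = 0) ->
  (forall ax,F 5%N ax + crs (W 5%N) (pv 0 (0,1,2)%N) ax = 0) ->
  (forall ax, F 0%N ax + crs (W 0%N) (pv 0 (1, 1, 0)%N) ax = F 1%N ax + crs (W 1%N) (pv 0 (1, 1, 0)%N) ax) ->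
  (forall ax, F 1%N ax + crs (W 1%N) (pv 0 (0, 2, 0)%N) ax = F 2%N ax + crs (W 2%N) (pv 0 (0, 2, 0)%N) ax) ->
  (forall ax, F 2%N ax + crs (W 2%N) (pv 0 (1, 3, 1)%N) ax = F 3%N ax + crs (W 3%N) (pv 0 (1, 3, 1)%N) ax) ->
  (forall ax, F 3%N ax + crs (W 3%N) (pv 0 (0, 2, 2)%N) ax = F 4%N ax + crs (W 4%N) (pv 0 (0, 2, 2)%N) ax) ->
  (forall ax, F 4%N ax + crs (W 4%N) (pv 0 (1, 1, 2)%N) ax = F 5%N ax + crs (W 5%N) (pv 0 (1, 1, 2)%N) ax) ->
  (forall ax, F 5%N ax + crs (W 5%N) (pv 0 (0, 0, 1)%N) ax = F 0%N ax + crs (W 0%N) (pv 0 (0, 0, 1)%N) ax) ->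
  forall i, (i < 6)%N -> forall ax, W i ax = 0.
Proof.
move=> h0 h1 h2 h3 h4 h5 h6 h7 h8 h9 h10 h11.
have [h0a [h0b h0c]] := (h0 a0, (h0 a1, h0 a2)); clear h0.
have [h1a [h1b h1c]] := (h1 a0, (h1 a1, h1 a2)); clear h1.
have [h2a [h2b h2c]] := (h2 a0, (h2 a1, h2 a2)); clear h2.
have [h3a [h3b h3c]] := (h3 a0, (h3 a1, h3 a2)); clear h3.
have [h4a [h4b h4c]] := (h4 a0, (h4 a1, h4 a2)); clear h4.
have [h5a [h5b h5c]] := (h5 a0, (h5 a1, h5 a2)); clear h5.
have [h6a [h6b h6c]] := (h6 a0, (h6 a1, h6 a2)); clear h6.
have [h7a [h7b h7c]] := (h7 a0, (h7 a1, h7 a2)); clear h7.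
have [h8a [h8b h8c]] := (h8 a0, (h8 a1, h8 a2)); clear h8.
have [h9a [h9b h9c]] := (h9 a0, (h9 a1, h9 a2)); clear h9.
have [h10a [h10b h10c]] := (h10 a0, (h10 a1, h10 a2)); clear h10.
have [h11a [h11b h11c]] := (h11 a0, (h11 a1, h11 a2)); clear h11.
move: h0a h0b h0c h1a h1b h1c h2a h2b h2c h3a h3b h3c h4a h4b h4c h5a h5b h5c h6a h6b h6c h7a h7b h7c h8a h8b h8c h9a h9b h9c h10a h10b h10c h11a h11b h11c; rewrite /crs /pv /=.
move=> h0a h0b h0c h1a h1b h1c h2a h2b h2c h3a h3b h3c h4a h4b h4c h5a h5b h5c h6a h6b h6c h7a h7b h7c h8a h8b h8c h9a h9b h9c h10a h10b h10c h11a h11b h11c.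
case=> [|[|[|[|[|[|//]]]]]] // _ ax; case: (ord3_cases ax) => [->|[->|->]]; lra.
Qed.

Lemma pl_0_3 (F W : nat -> 'I_3 -> R) :
  (forall ax,F 0%N ax + crs (W 0%N) (pv 0 (0,0,1)%N) ax = 0) ->
  (forall ax,F 1%N ax + crs (W 1%N) (pv 0 (0,1,0)%N) ax = 0) ->
  (forall ax,F 2%N ax + crs (W 2%N) (pv 0 (0,0,2)%N) ax = 0) ->
  (forall ax, F 0%N ax + crs (W 0%N) (pv 0 (1, 1, 0)%N) ax = F 1%N ax + crs (W 1%N) (pv 0 (1, 1, 0)%N) ax) ->
  (forall ax, F 1%N ax + crs (W 1%N) (pv 0 (0, 1, 1)%N) ax = F 2%N ax + crs (W 2%N) (pv 0 (0, 1, 1)%N) ax) ->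
  (forall ax, F 2%N ax + crs (W 2%N) (pv 0 (1, 1, 1)%N) ax = F 0%N ax + crs (W 0%N) (pv 0 (1, 1, 1)%N) ax) ->
  forall i, (i < 3)%N -> forall ax, W i ax = 0.
Proof.
move=> h0 h1 h2 h3 h4 h5.
have [h0a [h0b h0c]] := (h0 a0, (h0 a1, h0 a2)); clear h0.
have [h1a [h1b h1c]] := (h1 a0, (h1 a1, h1 a2)); clear h1.
have [h2a [h2b h2c]] := (h2 a0, (h2 a1, h2 a2)); clear h2.
have [h3a [h3b h3c]] := (h3 a0, (h3 a1, h3 a2)); clear h3.
have [h4a [h4b h4c]] := (h4 a0, (h4 a1, h4 a2)); clear h4.
have [h5a [h5b h5c]] := (h5 a0, (h5 a1, h5 a2)); clear h5.
move: h0a h0b h0c h1a h1b h1c h2a h2b h2c h3a h3b h3c h4a h4b h4c h5a h5b h5c; rewrite /crs /pv /=.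
move=> h0a h0b h0c h1a h1b h1c h2a h2b h2c h3a h3b h3c h4a h4b h4c h5a h5b h5c.
case=> [|[|[|//]]] // _ ax; case: (ord3_cases ax) => [->|[->|->]]; lra.
Qed.

Lemma pl_0_4 (F W : nat -> 'I_3 -> R) :
  (forall ax,F 0%N ax + crs (W 0%N) (pv 0 (0,3,1)%N) ax = 0) ->
  (forall ax,F 1%N ax + crs (W 1%N) (pv 0 (0,2,2)%N) ax = 0) ->
  (forall ax,F 2%N ax + crs (W 2%N) (pv 0 (0,3,2)%N) ax = 0) ->
  (forall ax,F 3%N ax + crs (W 3%N) (pv 0 (0,2,2)%N) ax = 0) ->
  (forall ax,F 4%N ax + crs (W 4%N) (pv 0 (0,0,3)%N) ax = 0) ->
  (forall ax,F 5%N ax + crs (W 5%N) (pv 0 (0,1,2)%N) ax = 0) ->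
  (forall ax, F 0%N ax + crs (W 0%N) (pv 0 (1, 2, 1)%N) ax = F 1%N ax + crs (W 1%N) (pv 0 (1, 2, 1)%N) ax) ->
  (forall ax, F 1%N ax + crs (W 1%N) (pv 0 (1, 3, 2)%N) ax = F 2%N ax + crs (W 2%N) (pv 0 (1, 3, 2)%N) ax) ->
  (forall ax, F 2%N ax + crs (W 2%N) (pv 0 (1, 2, 3)%N) ax = F 3%N ax + crs (W 3%N) (pv 0 (1, 2, 3)%N) ax) ->
  (forall ax, F 3%N ax + crs (W 3%N) (pv 0 (0, 1, 3)%N) ax = F 4%N ax + crs (W 4%N) (pv 0 (0, 1, 3)%N) ax) ->
  (forall ax, F 4%N ax + crs (W 4%N) (pv 0 (1, 1, 2)%N) ax = F 5%N ax + crs (W 5%N) (pv 0 (1, 1, 2)%N) ax) ->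
  (forall ax, F 5%N ax + crs (W 5%N) (pv 0 (0, 2, 1)%N) ax = F 0%N ax + crs (W 0%N) (pv 0 (0, 2, 1)%N) ax) ->
  forall i, (i < 6)%N -> forall ax, W i ax = 0.
Proof.
move=> h0 h1 h2 h3 h4 h5 h6 h7 h8 h9 h10 h11.
have [h0a [h0b h0c]] := (h0 a0, (h0 a1, h0 a2)); clear h0.
have [h1a [h1b h1c]] := (h1 a0, (h1 a1, h1 a2)); clear h1.
have [h2a [h2b h2c]] := (h2 a0, (h2 a1, h2 a2)); clear h2.
have [h3a [h3b h3c]] := (h3 a0, (h3 a1, h3 a2)); clear h3.
have [h4a [h4b h4c]] := (h4 a0, (h4 a1, h4 a2)); clear h4.
have [h5a [h5b h5c]] := (h5 a0, (h5 a1, h5 a2)); clear h5.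
have [h6a [h6b h6c]] := (h6 a0, (h6 a1, h6 a2)); clear h6.
have [h7a [h7b h7c]] := (h7 a0, (h7 a1, h7 a2)); clear h7.
have [h8a [h8b h8c]] := (h8 a0, (h8 a1, h8 a2)); clear h8.
have [h9a [h9b h9c]] := (h9 a0, (h9 a1, h9 a2)); clear h9.
have [h10a [h10b h10c]] := (h10 a0, (h10 a1, h10 a2)); clear h10.
have [h11a [h11b h11c]] := (h11 a0, (h11 a1, h11 a2)); clear h11.
move: h0a h0b h0c h1a h1b h1c h2a h2b h2c h3a h3b h3c h4a h4b h4c h5a h5b h5c h6a h6b h6c h7a h7b h7c h8a h8b h8c h9a h9b h9c h10a h10b h10c h11a h11b h11c; rewrite /crs /pv /=.
move=> h0a h0b h0c h1a h1b h1c h2a h2b h2c h3a h3b h3c h4a h4b h4c h5a h5b h5c h6a h6b h6c h7a h7b h7c h8a h8b h8c h9a h9b h9c h10a h10b h10c h11a h11b h11c.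
case=> [|[|[|[|[|[|//]]]]]] // _ ax; case: (ord3_cases ax) => [->|[->|->]]; lra.
Qed.

Lemma pl_1_0 (F W : nat -> 'I_3 -> R) :
  (forall ax,F 0%N ax + crs (W 0%N) (pv 1 (0,1,0)%N) ax = 0) ->
  (forall ax,F 1%N ax + crs (W 1%N) (pv 1 (0,2,0)%N) ax = 0) ->
  (forall ax,F 2%N ax + crs (W 2%N) (pv 1 (0,1,2)%N) ax = 0) ->
  (forall ax,F 3%N ax + crs (W 3%N) (pv 1 (0,0,2)%N) ax = 0) ->
  (forall ax, F 0%N ax + crs (W 0%N) (pv 1 (1, 1, 0)%N) ax = F 1%N ax + crs (W 1%N) (pv 1 (1, 1, 0)%N) ax) ->
  (forall ax, F 1%N ax + crs (W 1%N) (pv 1 (1, 2, 1)%N) ax = F 2%N ax + crs (W 2%N) (pv 1 (1, 2, 1)%N) ax) ->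
  (forall ax, F 2%N ax + crs (W 2%N) (pv 1 (1, 1, 2)%N) ax = F 3%N ax + crs (W 3%N) (pv 1 (1, 1, 2)%N) ax) ->
  (forall ax, F 3%N ax + crs (W 3%N) (pv 1 (1, 0, 1)%N) ax = F 0%N ax + crs (W 0%N) (pv 1 (1, 0, 1)%N) ax) ->
  forall i, (i < 4)%N -> forall ax, W i ax = 0.
Proof.
move=> h0 h1 h2 h3 h4 h5 h6 h7.
have [h0a [h0b h0c]] := (h0 a0, (h0 a1, h0 a2)); clear h0.
have [h1a [h1b h1c]] := (h1 a0, (h1 a1, h1 a2)); clear h1.
have [h2a [h2b h2c]] := (h2 a0, (h2 a1, h2 a2)); clear h2.
have [h3a [h3b h3c]] := (h3 a0, (h3 a1, h3 a2)); clear h3.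
have [h4a [h4b h4c]] := (h4 a0, (h4 a1, h4 a2)); clear h4.
have [h5a [h5b h5c]] := (h5 a0, (h5 a1, h5 a2)); clear h5.
have [h6a [h6b h6c]] := (h6 a0, (h6 a1, h6 a2)); clear h6.
have [h7a [h7b h7c]] := (h7 a0, (h7 a1, h7 a2)); clear h7.
move: h0a h0b h0c h1a h1b h1c h2a h2b h2c h3a h3b h3c h4a h4b h4c h5a h5b h5c h6a h6b h6c h7a h7b h7c; rewrite /crs /pv /=.
move=> h0a h0b h0c h1a h1b h1c h2a h2b h2c h3a h3b h3c h4a h4b h4c h5a h5b h5c h6a h6b h6c h7a h7b h7c.
case=> [|[|[|[|//]]]] // _ ax; case: (ord3_cases ax) => [->|[->|->]]; lra.
Qed.

Lemma pl_1_1 (F W : nat -> 'I_3 -> R) :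
  (forall ax,F 0%N ax + crs (W 0%N) (pv 1 (0,0,0)%N) ax = 0) ->
  (forall ax,F 1%N ax + crs (W 1%N) (pv 1 (0,2,1)%N) ax = 0) ->
  (forall ax,F 2%N ax + crs (W 2%N) (pv 1 (0,2,2)%N) ax = 0) ->
  (forall ax,F 3%N ax + crs (W 3%N) (pv 1 (0,1,2)%N) ax = 0) ->
  (forall ax,F 4%N ax + crs (W 4%N) (pv 1 (0,0,2)%N) ax = 0) ->
  (forall ax,F 5%N ax + crs (W 5%N) (pv 1 (0,0,1)%N) ax = 0) ->
  (forall ax, F 0%N ax + crs (W 0%N) (pv 1 (1, 1, 0)%N) ax = F 1%N ax + crs (W 1%N) (pv 1 (1, 1, 0)%N) ax) ->
  (forall ax, F 1%N ax + crs (W 1%N) (pv 1 (0, 1, 1)%N) ax = F 2%N ax + crs (W 2%N) (pv 1 (0, 1, 1)%N) ax) ->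
  (forall ax, F 2%N ax + crs (W 2%N) (pv 1 (1, 2, 2)%N) ax = F 3%N ax + crs (W 3%N) (pv 1 (1, 2, 2)%N) ax) ->
  (forall ax, F 3%N ax + crs (W 3%N) (pv 1 (1, 1, 3)%N) ax = F 4%N ax + crs (W 4%N) (pv 1 (1, 1, 3)%N) ax) ->
  (forall ax, F 4%N ax + crs (W 4%N) (pv 1 (1, 1, 2)%N) ax = F 5%N ax + crs (W 5%N) (pv 1 (1, 1, 2)%N) ax) ->
  (forall ax, F 5%N ax + crs (W 5%N) (pv 1 (0, 1, 1)%N) ax = F 0%N ax + crs (W 0%N) (pv 1 (0, 1, 1)%N) ax) ->
  forall i, (i < 6)%N -> forall ax, W i ax = 0.
Proof.
move=> h0 h1 h2 h3 h4 h5 h6 h7 h8 h9 h10 h11.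
have [h0a [h0b h0c]] := (h0 a0, (h0 a1, h0 a2)); clear h0.
have [h1a [h1b h1c]] := (h1 a0, (h1 a1, h1 a2)); clear h1.
have [h2a [h2b h2c]] := (h2 a0, (h2 a1, h2 a2)); clear h2.
have [h3a [h3b h3c]] := (h3 a0, (h3 a1, h3 a2)); clear h3.
have [h4a [h4b h4c]] := (h4 a0, (h4 a1, h4 a2)); clear h4.
have [h5a [h5b h5c]] := (h5 a0, (h5 a1, h5 a2)); clear h5.
have [h6a [h6b h6c]] := (h6 a0, (h6 a1, h6 a2)); clear h6.
have [h7a [h7b h7c]] := (h7 a0, (h7 a1, h7 a2)); clear h7.
have [h8a [h8b h8c]] := (h8 a0, (h8 a1, h8 a2)); clear h8.
have [h9a [h9b h9c]] := (h9 a0, (h9 a1, h9 a2)); clear h9.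
have [h10a [h10b h10c]] := (h10 a0, (h10 a1, h10 a2)); clear h10.
have [h11a [h11b h11c]] := (h11 a0, (h11 a1, h11 a2)); clear h11.
move: h0a h0b h0c h1a h1b h1c h2a h2b h2c h3a h3b h3c h4a h4b h4c h5a h5b h5c h6a h6b h6c h7a h7b h7c h8a h8b h8c h9a h9b h9c h10a h10b h10c h11a h11b h11c; rewrite /crs /pv /=.
move=> h0a h0b h0c h1a h1b h1c h2a h2b h2c h3a h3b h3c h4a h4b h4c h5a h5b h5c h6a h6b h6c h7a h7b h7c h8a h8b h8c h9a h9b h9c h10a h10b h10c h11a h11b h11c.
case=> [|[|[|[|[|[|//]]]]]] // _ ax; case: (ord3_cases ax) => [->|[->|->]]; lra.
Qed.

Lemma pl_2_0 (F W : nat -> 'I_3 -> R) :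
  (forall ax,F 0%N ax + crs (W 0%N) (pv 2 (0,1,0)%N) ax = 0) ->
  (forall ax,F 1%N ax + crs (W 1%N) (pv 2 (0,2,0)%N) ax = 0) ->
  (forall ax,F 2%N ax + crs (W 2%N) (pv 2 (0,1,2)%N) ax = 0) ->
  (forall ax,F 3%N ax + crs (W 3%N) (pv 2 (0,0,2)%N) ax = 0) ->
  (forall ax, F 0%N ax + crs (W 0%N) (pv 2 (1, 1, 0)%N) ax = F 1%N ax + crs (W 1%N) (pv 2 (1, 1, 0)%N) ax) ->
  (forall ax, F 1%N ax + crs (W 1%N) (pv 2 (1, 2, 1)%N) ax = F 2%N ax + crs (W 2%N) (pv 2 (1, 2, 1)%N) ax) ->
  (forall ax, F 2%N ax + crs (W 2%N) (pv 2 (1, 1, 2)%N) ax = F 3%N ax + crs (W 3%N) (pv 2 (1, 1, 2)%N) ax) ->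
  (forall ax, F 3%N ax + crs (W 3%N) (pv 2 (1, 0, 1)%N) ax = F 0%N ax + crs (W 0%N) (pv 2 (1, 0, 1)%N) ax) ->
  forall i, (i < 4)%N -> forall ax, W i ax = 0.
Proof.
move=> h0 h1 h2 h3 h4 h5 h6 h7.
have [h0a [h0b h0c]] := (h0 a0, (h0 a1, h0 a2)); clear h0.
have [h1a [h1b h1c]] := (h1 a0, (h1 a1, h1 a2)); clear h1.
have [h2a [h2b h2c]] := (h2 a0, (h2 a1, h2 a2)); clear h2.
have [h3a [h3b h3c]] := (h3 a0, (h3 a1, h3 a2)); clear h3.
have [h4a [h4b h4c]] := (h4 a0, (h4 a1, h4 a2)); clear h4.
have [h5a [h5b h5c]] := (h5 a0, (h5 a1, h5 a2)); clear h5.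
have [h6a [h6b h6c]] := (h6 a0, (h6 a1, h6 a2)); clear h6.
have [h7a [h7b h7c]] := (h7 a0, (h7 a1, h7 a2)); clear h7.
move: h0a h0b h0c h1a h1b h1c h2a h2b h2c h3a h3b h3c h4a h4b h4c h5a h5b h5c h6a h6b h6c h7a h7b h7c; rewrite /crs /pv /=.
move=> h0a h0b h0c h1a h1b h1c h2a h2b h2c h3a h3b h3c h4a h4b h4c h5a h5b h5c h6a h6b h6c h7a h7b h7c.
case=> [|[|[|[|//]]]] // _ ax; case: (ord3_cases ax) => [->|[->|->]]; lra.
Qed.

Lemma pl_base (F W : nat -> 'I_3 -> R) :
  (forall ax,F 0%N ax + crs (W 0%N) (pv 0 (1,0,0)%N) ax = 0) ->
  (forall ax,F 1%N ax + crs (W 1%N) (pv 0 (0,1,0)%N) ax = 0) ->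
  (forall ax,F 2%N ax + crs (W 2%N) (pv 0 (1,1,0)%N) ax = 0) ->
  (forall ax, F 0%N ax + crs (W 0%N) (pv 0 (1, 1, 1)%N) ax = F 1%N ax + crs (W 1%N) (pv 0 (1, 1, 1)%N) ax) ->
  (forall ax, F 1%N ax + crs (W 1%N) (pv 0 (1, 2, 0)%N) ax = F 2%N ax + crs (W 2%N) (pv 0 (1, 2, 0)%N) ax) ->
  (forall ax, F 2%N ax + crs (W 2%N) (pv 0 (2, 1, 1)%N) ax = F 0%N ax + crs (W 0%N) (pv 0 (2, 1, 1)%N) ax) ->
  forall i, (i < 3)%N -> forall ax, W i ax = 0.
Proof.
move=> h0 h1 h2 h3 h4 h5.
have [h0a [h0b h0c]] := (h0 a0, (h0 a1, h0 a2)); clear h0.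
have [h1a [h1b h1c]] := (h1 a0, (h1 a1, h1 a2)); clear h1.
have [h2a [h2b h2c]] := (h2 a0, (h2 a1, h2 a2)); clear h2.
have [h3a [h3b h3c]] := (h3 a0, (h3 a1, h3 a2)); clear h3.
have [h4a [h4b h4c]] := (h4 a0, (h4 a1, h4 a2)); clear h4.
have [h5a [h5b h5c]] := (h5 a0, (h5 a1, h5 a2)); clear h5.
move: h0a h0b h0c h1a h1b h1c h2a h2b h2c h3a h3b h3c h4a h4b h4c h5a h5b h5c; rewrite /crs /pv /=.
move=> h0a h0b h0c h1a h1b h1c h2a h2b h2c h3a h3b h3c h4a h4b h4c h5a h5b h5c.
case=> [|[|[|//]]] // _ ax; case: (ord3_cases ax) => [->|[->|->]]; lra.
Qed.

End Pieces.

Section Pieces2.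
Variable R : realFieldType.
Local Notation crs := (@crs R).
Local Notation pv := (@pv R).
Lemma piece_gen d s (F W : nat -> 'I_3 -> R) :
  (d < 3)%N -> (s < 5)%N -> (d == 1%N -> s <= 1)%N -> (d == 2%N -> s == 0%N) ->
  (forall j, (j < slen s)%N -> forall ax, F j ax + crs (W j) (pv d (satt s j)) ax = 0) ->
  (forall j, (j < slen s)%N -> forall ax,
     F j ax + crs (W j) (pv d (scyc s j)) ax = F (nxt s j) ax + crs (W (nxt s j)) (pv d (scyc s j)) ax) ->
  forall j, (j < slen s)%N -> forall ax, W j ax = 0.
Proof.
move=> hd hs h1 h2 hA hC.
case: d hd h1 h2 hA hC => [|[|[|//]]] _ h1 h2 hA hC.
- case: s hs {h1 h2} hA hC => [|[|[|[|[|//]]]]] _ hA hC.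
  + exact: (pl_0_0 (hA 0%N isT) (hA 1%N isT) (hA 2%N isT) (hA 3%N isT) (hC 0%N isT) (hC 1%N isT) (hC 2%N isT) (hC 3%N isT)).
  + exact: (pl_0_1 (hA 0%N isT) (hA 1%N isT) (hA 2%N isT) (hA 3%N isT) (hA 4%N isT) (hA 5%N isT) (hC 0%N isT) (hC 1%N isT) (hC 2%N isT) (hC 3%N isT) (hC 4%N isT) (hC 5%N isT)).
  + exact: (pl_0_2 (hA 0%N isT) (hA 1%N isT) (hA 2%N isT) (hA 3%N isT) (hA 4%N isT) (hA 5%N isT) (hC 0%N isT) (hC 1%N isT) (hC 2%N isT) (hC 3%N isT) (hC 4%N isT) (hC 5%N isT)).
  + exact: (pl_0_3 (hA 0%N isT) (hA 1%N isT) (hA 2%N isT) (hC 0%N isT) (hC 1%N isT) (hC 2%N isT)).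
  + exact: (pl_0_4 (hA 0%N isT) (hA 1%N isT) (hA 2%N isT) (hA 3%N isT) (hA 4%N isT) (hA 5%N isT) (hC 0%N isT) (hC 1%N isT) (hC 2%N isT) (hC 3%N isT) (hC 4%N isT) (hC 5%N isT)).
- have := h1 isT; case: s hs {h1 h2} hA hC => [|[|//]] _ hA hC _.
  + exact: (pl_1_0 (hA 0%N isT) (hA 1%N isT) (hA 2%N isT) (hA 3%N isT) (hC 0%N isT) (hC 1%N isT) (hC 2%N isT) (hC 3%N isT)).
  + exact: (pl_1_1 (hA 0%N isT) (hA 1%N isT) (hA 2%N isT) (hA 3%N isT) (hA 4%N isT) (hA 5%N isT) (hC 0%N isT) (hC 1%N isT) (hC 2%N isT) (hC 3%N isT) (hC 4%N isT) (hC 5%N isT)).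
- have := h2 isT; case: s hs {h1 h2} hA hC => [|//] _ hA hC _.
  exact: (pl_2_0 (hA 0%N isT) (hA 1%N isT) (hA 2%N isT) (hA 3%N isT) (hC 0%N isT) (hC 1%N isT) (hC 2%N isT) (hC 3%N isT)).
Qed.

End Pieces2.

Lemma gridax_gridpt L M N (c : cube L M N) (p : corner) ax :
  gridax (gridpt (c, p)) ax = (gridax (val c.1.1, val c.1.2, val c.2) ax + pax p ax)%N.
Proof. by case: c => [[x y] z]; case: p => [[i j] k]; rewrite /gridpt /pax; case: (ord3_cases ax) => [->|[->|->]]. Qed.

Lemma cp_neq (p q : corner) : cp_pred (p, q) -> p != q.
Proof. by rewrite /cp_pred /= => /andP [h _]; apply: contraTneq h => ->; rewrite ltnn. Qed.

Section Kin.
Variables (R : realFieldType) (l : R) (hl : 0 < l) (K : nat) (hK : (0 < K)%N).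
Local Notation L := K.+1.
Local Notation cubeL := (cube L L L).
Local Notation oc := (oc K).
Local Notation mk_link := (mk_link K).
Variable x : 'rV[R]_#|{: coord L L L}|.
Hypothesis hx : x *m (rigidity_matrix l (Pat K))^T = 0.

Definition Vc (c : cubeL) (p : corner) (ax : 'I_3) : R := Vx x (c, p) ax.

Lemma cube_H c p q : cp_pred (p, q) ->
  \sum_(ax < 3) ((pax p ax)%:R - (pax q ax)%:R) * (Vc c p ax - Vc c q ax) = 0.
Proof.
move=> hpq.
have hne : (c, p) != (c, q) by rewrite xpair_eqE eqxx /= cp_neq.
have := ker_row hx (cube_row_mem l (Pat K) c hpq); rewrite dot_dist //.
have -> : \sum_(ax < 3) 2 * (pos l (c, p) ax - pos l (c, q) ax) * (Vx x (c, p) ax - Vx x (c, q) ax)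
  = (2 * l) * \sum_(ax < 3) ((pax p ax)%:R - (pax q ax)%:R) * (Vc c p ax - Vc c q ax).
  rewrite mulr_sumr; apply: eq_bigr => ax _.
  rewrite /pos !gridax_gridpt !natrD /Vc; ring.
move/eqP; rewrite mulf_eq0 => /orP [|/eqP //].
by rewrite mulf_eq0 pnatr_eq0 /= (gt_eqF hl).
Qed.

Definition cX (c : cubeL) (a : 'I_3) : R := (gridax (nc c) a)%:R.
Definition gX (G : T3) (a : 'I_3) : R := (gridax G a)%:R.
Definition vel (c : cubeL) (X : 'I_3 -> R) (ax : 'I_3) : R :=
  ct (Vc c) ax + crs (cw (Vc c)) (fun a => X a - cX c a) ax.

Lemma crs_ext (w w' p p' : 'I_3 -> R) ax :
  (forall a, w a = w' a) -> (forall a, p a = p' a) -> crs w p ax = crs w' p' ax.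
Proof. by move=> hw hp; rewrite /crs !hw !hp. Qed.

Lemma V_vel c p ax : Vc c p ax = vel c (gX (gridpt (c, p))) ax.
Proof.
rewrite (cube_rigid (@cube_H c)) /vel; congr (_ + _); apply: crs_ext => // a.
by rewrite /gX /cX gridax_gridpt natrD /nc addrC addKr.
Qed.

Lemma vel_affine c (X O : 'I_3 -> R) ax :
  vel c X ax = vel c O ax + crs (cw (Vc c)) (fun a => X a - O a) ax.
Proof. rewrite /vel /crs; case: ifP => _; [|case: ifP => _]; ring. Qed.

Lemma link_vel (c d X : T3) : inb L c -> inb L d -> c != d -> le1 c X -> le1 d X ->
  mk_link c d X \in Pat K -> forall ax, vel (oc c) (gX X) ax = vel (oc d) (gX X) ax.
Proof.
move=> hc hd hcd h1 h2 hin ax.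
have [u [w [e1 e2 e3 eu ew]]] := valid_mk hK hc hd hcd h1 h2.
have huw : u != w by apply: contra e2 => /eqP ->.
have hin' : [set u; w] \in Pat K by rewrite -e1.
have := link_eq hx hin' huw ax.
rewrite eu ew -/(Vc _ _ ax) -/(Vc _ _ ax) !V_vel.
by rewrite (gridpt_mk hK hc h1) (gridpt_mk hK hd h2).
Qed.

Local Notation org := (org K).
Definition Rig (c : cubeL) : Prop := forall X ax, vel c X ax = vel org X ax.

Lemma vel_ext c X X' ax : (forall a, X a = X' a) -> vel c X ax = vel c X' ax.
Proof. by move=> h; rewrite /vel; congr (_ + _); apply: crs_ext => // a; rewrite h. Qed.

Lemma rig_of_FW c (O : 'I_3 -> R) : (forall ax, vel c O ax = vel org O ax) ->
  (forall ax, cw (Vc c) ax = cw (Vc org) ax) -> Rig c.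
Proof.
move=> hF hW X ax; rewrite (vel_affine c X O) (vel_affine org X O) hF.
by congr (_ + _); apply: crs_ext.
Qed.

Lemma FW_eq c (O A : 'I_3 -> R) ax :
  vel c (fun a => O a + A a) ax - vel org (fun a => O a + A a) ax =
  (vel c O ax - vel org O ax) + crs (fun a => cw (Vc c) a - cw (Vc org) a) A ax.
Proof.
rewrite (vel_affine c _ O) (vel_affine org _ O) /crs.
case: ifP => _; [|case: ifP => _]; rewrite /=; ring.
Qed.

Lemma gX_world_add d t u v (a : T3) ax : (d < 3)%N ->
  gX (world d (t + a.1.1) (u + a.1.2) (v + a.2)) ax = gX (world d t u v) ax + pv R d a ax.
Proof.
move=> hd; case: a => [[a b] c']; rewrite /gX /pv /world /=.
case: d hd => [|[|[|//]]] _ /=; case: (ord3_cases ax) => [->|[->|->]] /=; by rewrite natrD.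
Qed.

Section PieceHyps.
Variables (d t u0 v0 n : nat) (mnat : nat -> T3) (A C : nat -> T3) (nx : nat -> nat).
Hypothesis hd : (d < 3)%N.
Hypothesis hm : forall j, (j < n)%N ->
  [/\ inb L (mnat j), mnat j != (0,0,0)%N, Rig (oc (par (mnat j))),
      attpt L (mnat j) = world d (t + (A j).1.1) (u0 + (A j).1.2) (v0 + (A j).2) &
      [/\ (nx j < n)%N, succ L (mnat j) = mnat (nx j) &
          cycpt L (mnat j) = world d (t + (C j).1.1) (u0 + (C j).1.2) (v0 + (C j).2)]].
Let O := gX (world d t u0 v0).
Let F j ax := vel (oc (mnat j)) O ax - vel org O ax.
Let W j ax := cw (Vc (oc (mnat j))) ax - cw (Vc org) ax.

Lemma ph_att j : (j < n)%N -> forall ax, F j ax + crs (W j) (pv R d (A j)) ax = 0.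
Proof.
move=> hj ax; have [h1 h2 h3 h4 [h5 h6 h7]] := hm hj.
have [[p1 p2 p3 p4] _] := valid_nat (L := L) (hL2 hK) h1 h2.
have hin : mk_link (mnat j) (par (mnat j)) (attpt L (mnat j)) \in Pat K.
  rewrite inE; apply/orP; left; apply/imsetP; exists (oc (mnat j)).
    by rewrite inE ocK.
  by rewrite /attL ocK.
have p2' : mnat j != par (mnat j) by rewrite eq_sym.
have hv := link_vel h1 p1 p2' p3 p4 hin ax.
rewrite h3 in hv.
rewrite /F /W -FW_eq; apply/eqP; rewrite subr_eq0; apply/eqP.
have e : forall c, vel c (fun a => O a + pv R d (A j) a) ax = vel c (gX (attpt L (mnat j))) ax.
  by move=> c; apply: vel_ext => a; rewrite h4 gX_world_add.
by rewrite !e hv.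
Qed.

Lemma ph_cyc j : (j < n)%N -> forall ax,
  F j ax + crs (W j) (pv R d (C j)) ax = F (nx j) ax + crs (W (nx j)) (pv R d (C j)) ax.
Proof.
move=> hj ax; have [h1 h2 h3 h4 [h5 h6 h7]] := hm hj.
have [_ [q1 q2 q3 q4]] := valid_nat (L := L) (hL2 hK) h1 h2.
have hin : mk_link (mnat j) (succ L (mnat j)) (cycpt L (mnat j)) \in Pat K.
  rewrite inE; apply/orP; right; apply/imsetP; exists (oc (mnat j)).
    by rewrite inE ocK.
  by rewrite /cycL ocK.
have q2' : mnat j != succ L (mnat j) by rewrite eq_sym.
have hv := link_vel h1 q1 q2' q3 q4 hin ax.
rewrite h6 in hv.
rewrite /F /W -!FW_eq.
have e : forall c, vel c (fun a => O a + pv R d (C j) a) ax = vel c (gX (cycpt L (mnat j))) ax.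
  by move=> c; apply: vel_ext => a; rewrite h7 gX_world_add.
by rewrite !e hv.
Qed.

Lemma ph_rig : (forall j, (j < n)%N -> forall ax, W j ax = 0) ->
  forall j, (j < n)%N -> Rig (oc (mnat j)).
Proof.
move=> hW j hj; apply: (rig_of_FW (O := O)).
  move=> ax; have := ph_att hj ax.
  have -> : crs (W j) (pv R d (A j)) ax = 0.
    by rewrite /crs !hW // !mul0r subrr; case: ifP => //; case: ifP.
  by rewrite addr0 /F => /eqP; rewrite subr_eq0 => /eqP.
by move=> ax; apply/eqP; rewrite -subr_eq0; apply/eqP; exact: hW.
Qed.

End PieceHyps.

End Kin.

Lemma SH_bounds L d u v : [/\ (SH L d u v < 5)%N, (d == 1%N -> SH L d u v <= 1)%N &
  (d == 2%N -> SH L d u v == 0%N)].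
Proof.
rewrite /SH /shape_of /pRu /pRv; split.
- by repeat case: ifP.
- by move/eqP => ->; rewrite /= /segl /=; repeat case: ifP.
- by move/eqP => ->; rewrite /= /segl /=; repeat case: ifP.
Qed.

Lemma phase0 : phase (0,0,0)%N = 3%N. Proof. by []. Qed.

Section Rig.
Variables (R : realFieldType) (l : R) (hl : 0 < l) (K : nat) (hK : (0 < K)%N).
Local Notation L := K.+1.
Local Notation cubeL := (cube L L L).
Local Notation oc := (oc K).
Variable x : 'rV[R]_#|{: coord L L L}|.
Hypothesis hx : x *m (rigidity_matrix l (Pat K))^T = 0.
Local Notation Rig := (Rig x).
Local Notation vel := (vel x).
Local Notation Vc := (Vc x).

Lemma rig_step (c : cubeL) :
  (forall c' : cubeL, (mu L (nc c') < mu L (nc c))%N -> Rig c') -> Rig c.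
Proof.
move=> IH.
have hL := hL2 hK.
case: (eqVneq (nc c) (0,0,0)%N) => h0.
  by rewrite -(ncK c) h0 => X ax.
case: (ltnP (phase (nc c)) 3) => hp.
- have [hok hw] := world_dec (nc_inb c) hp.
  move: hok hw.
  set d := phase (nc c); set t := (tuv (nc c)).1.1; set u := (tuv (nc c)).1.2; set v := (tuv (nc c)).2.
  move=> hok hw.
  set s := SH L d u v.
  set mnat := fun j => world d t (U0 L d u + (scell s j).1) (V0 L d v + (scell s j).2).
  have hd : (d < 3)%N by [].
  have [f1 f2 f3] := piece_ok hL hok.
  have hm : forall j, (j < slen s)%N ->
    [/\ inb L (mnat j), mnat j != (0,0,0)%N, Rig (oc (par (mnat j))),
      attpt L (mnat j) = world d (t + (satt s j).1.1) (U0 L d u + (satt s j).1.2) (V0 L d v + (satt s j).2) &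
      [/\ (nxt s j < slen s)%N, succ L (mnat j) = mnat (nxt s j) &
          cycpt L (mnat j) = world d (t + (scyc s j).1.1) (U0 L d u + (scyc s j).1.2) (V0 L d v + (scyc s j).2)]].
    move=> j hj.
    have [m1 m2 m3 m4 [m5 m6]] := members hL hok hj.
    have [cc _] := f3 j hj.
    have hnx : (nxt s j < slen s)%N by move: cc; rewrite /cell_check => /and4P [_ _ _ /and5P [_ _ _ ->]].
    have hin := okD_inb hL m1.
    have hne : mnat j != (0,0,0)%N.
      apply/eqP => e; have [hpm _] := dec_world m1.
      by move: hpm; rewrite /mnat in e; rewrite e phase0; move: hd; case: (d) => //; lia.
    split => //.
    have hpar : inb L (par (mnat j)) by rewrite m3; exact: (inb_par hL m1).
    apply: IH; rewrite (ocK hpar) hw /mnat -m2 m3; by have := mu_par hL m1.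
  pose F j ax := vel (oc (mnat j)) (gX R (world d t (U0 L d u) (V0 L d v))) ax
                 - vel (org K) (gX R (world d t (U0 L d u) (V0 L d v))) ax.
  pose W j ax := cw (Vc (oc (mnat j))) ax - cw (Vc (org K)) ax.
  have [b1 b2 b3] := SH_bounds L d u v.
  have hW : forall j, (j < slen s)%N -> forall ax, W j ax = 0.
    apply: (piece_gen (F := F) (W := W) hd b1 b2 b3).
      exact: (ph_att hl hK hx hd hm).
    exact: (ph_cyc hl hK hx hd hm).
  have := ph_rig hl hK hx hd hm hW f1.
  by rewrite /mnat member_self // -hw ncK.
- have hp3 : phase (nc c) = 3%N.
    move: hp; rewrite /phase; case: (nc c) => [[a b] e].
    by do 3 case: ifP => //.
  set mnat := fun j => nth (0,0,0)%N bcells j.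
  have hm : forall j, (j < 3)%N ->
    [/\ inb L (mnat j), mnat j != (0,0,0)%N, Rig (oc (par (mnat j))),
      attpt L (mnat j) = world 0 (0 + (nth (0,0,0)%N batt j).1.1) (0 + (nth (0,0,0)%N batt j).1.2) (0 + (nth (0,0,0)%N batt j).2) &
      [/\ (bnxt j < 3)%N, succ L (mnat j) = mnat (bnxt j) &
          cycpt L (mnat j) = world 0 (0 + (nth (0,0,0)%N bcyc j).1.1) (0 + (nth (0,0,0)%N bcyc j).1.2) (0 + (nth (0,0,0)%N bcyc j).2)]].
    have hinb : forall j, (j < 3)%N -> inb L (mnat j).
      by case=> [|[|[|//]]] _; rewrite /inb /=; lia.
    case=> [|[|[|//]]] _; split => //; try exact: hinb;
      by rewrite /par /lift3 /= => X ax.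
  pose F j ax := vel (oc (mnat j)) (gX R (world 0 0 0 0)) ax - vel (org K) (gX R (world 0 0 0 0)) ax.
  pose W j ax := cw (Vc (oc (mnat j))) ax - cw (Vc (org K)) ax.
  have ha := ph_att hl hK hx (isT : (0 < 3)%N) hm.
  have hc := ph_cyc hl hK hx (isT : (0 < 3)%N) hm.
  have hW : forall j, (j < 3)%N -> forall ax, W j ax = 0.
    exact: (pl_base (F := F) (W := W) (ha 0%N isT) (ha 1%N isT) (ha 2%N isT) (hc 0%N isT) (hc 1%N isT) (hc 2%N isT)).
  have hr := ph_rig hl hK hx (isT : (0 < 3)%N) hm hW.
  have [e|[e|e]] := phase3_cases (nc_inb c) hp3 h0.
  + by have := hr 0%N isT; rewrite /mnat /= -e ncK.
  + by have := hr 1%N isT; rewrite /mnat /= -e ncK.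
  + by have := hr 2%N isT; rewrite /mnat /= -e ncK.
Qed.

Lemma rig_all (c : cubeL) : Rig c.
Proof.
suff : forall n (c : cubeL), (mu L (nc c) < n)%N -> Rig c by apply; exact: ltnSn.
elim=> [|n IHn] c' hc' //.
apply: rig_step => c'' h; apply: IHn; lia.
Qed.

End Rig.

Section G.
Variables (R : realFieldType) (L M N : nat).
Local Notation Nc := #|{: coord L M N}|.

Definition gfun (i : 'I_6) (k : coord L M N) : R :=
  let: (v, ax) := k in
  if (val i < 3)%N then ((val i == val ax)%:R)
  else crs (fun a => (((val i - 3)%N == val a)%:R)) (gX R (gridpt v)) ax.

Definition Gm : 'M[R]_(6, Nc) := \matrix_(i < 6, j < Nc) gfun i (enum_val j).

Lemma Vx_rowG i v ax : Vx (row i Gm) v ax = gfun i (v, ax).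
Proof. by rewrite /Vx !mxE enum_rankK. Qed.

Lemma crs_orth (e P Q : 'I_3 -> R) :
  \sum_(ax < 3) (P ax - Q ax) * (crs e P ax - crs e Q ax) = 0.
Proof. by rewrite sum3 /crs /=; ring. Qed.

Lemma rows_cases (l : R) (P : link_pattern L M N) r : valid_pattern P -> r \in all_rows l P ->
  (exists c p q, cp_pred (p, q) /\ r = dist_row l (c, p) (c, q)) \/
  (exists a b ax, [/\ a != b, gridpt a = gridpt b & r = link_row R a b ax]).
Proof.
move=> hv; rewrite mem_cat => /orP [].
  case/allpairsP => -[c [p q]] /= [_]; rewrite mem_filter => /andP [hpq _] ->.
  by left; exists c, p, q.
case/flatten_mapP => e; rewrite mem_enum => he.
have [u [w [-> [huw hg]]]] := hv e he.
have huw' : u != w by apply/negP => /eqP euw; move: huw; rewrite euw eqxx.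
set e' := [set u; w].
have hs : size (enum e') = 2%N by rewrite -cardE cards2 huw'.
have hmem : forall z, z \in enum e' -> z = u \/ z = w.
  by move=> z; rewrite mem_enum => /set2P.
have huq := enum_uniq (pred_of_set e').
rewrite /link_rows.
case E : (enum e') hs hmem huq => [|a [|b [|? ?]]] // _ hmem huq.
move=> /mapP [ax _ ->]; right; exists a, b, ax.
have hab : a != b by move: huq; rewrite /= inE andbT.
split => //.
have hb' : b \in [:: a; b] by rewrite !inE eqxx orbT.
by have [ha|ha] := hmem a (mem_head _ _); have [hb|hb] := hmem b hb'; rewrite ha hb.
Qed.

Lemma G_ker (l : R) (P : link_pattern L M N) : valid_pattern P ->
  Gm *m (rigidity_matrix l P)^T = 0.
Proof.
move=> hv; apply/matrixP => i k; rewrite !mxE.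
have hr : nth 0 (all_rows l P) k \in all_rows l P by rewrite mem_nth.
set r := nth 0 (all_rows l P) k in hr *.
have -> : \sum_j Gm i j * (rigidity_matrix l P)^T j k = \sum_j (row i Gm) 0 j * r 0 j.
  by apply: eq_bigr => j _; rewrite !mxE.
clearbody r.
case: (rows_cases hv hr) => [[c [p [q [hpq ->]]]]|[a [b [ax [hab hg ->]]]]].
- have hne : (c, p) != (c, q) by rewrite xpair_eqE eqxx /= cp_neq.
  rewrite dot_dist //.
  under eq_bigr => ax _ do rewrite !Vx_rowG /=.
  have [hi|hi] := boolP (i < 3)%N.
    by apply: big1 => ax _; rewrite subrr mulr0.
  rewrite /pos.
  set e := (fun a : 'I_3 => (((val i - 3)%N == val a)%:R : R)).
  set Gp := gX R (gridpt (c, p)); set Gq := gX R (gridpt (c, q)).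
  have h := crs_orth e Gp Gq.
  transitivity ((2 * l) * \sum_(ax < 3) (Gp ax - Gq ax) * (crs e Gp ax - crs e Gq ax)); last first.
    by rewrite h mulr0.
  rewrite mulr_sumr; apply: eq_bigr => ax _.
  rewrite /Gp /Gq /gX; ring.
- rewrite dot_link // !Vx_rowG /= hg; by rewrite subrr.
Qed.

End G.

Lemma sum6 (R : realFieldType) (F : 'I_6 -> R) :
  \sum_(i < 6) F i = F (@Ordinal 6 0 isT) + F (@Ordinal 6 1 isT) + F (@Ordinal 6 2 isT)
    + F (@Ordinal 6 3 isT) + F (@Ordinal 6 4 isT) + F (@Ordinal 6 5 isT).
Proof.
rewrite !big_ord_recr big_ord0 /= GRing.add0r.
by congr (_ + _ + _ + _ + _ + _); apply: congr1; exact: val_inj.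
Qed.

Section Final.
Variables (R : realFieldType) (l : R) (hl : 0 < l) (K : nat) (hK : (0 < K)%N).
Local Notation L := K.+1.
Local Notation Nc := #|{: coord L L L}|.

Lemma ker_span (x : 'rV[R]_Nc) : x *m (rigidity_matrix l (Pat K))^T = 0 -> (x <= Gm R L L L)%MS.
Proof.
move=> hx.
pose ct0 := ct (Vc x (org K)); pose cw0 := cw (Vc x (org K)).
pose a : 'rV[R]_6 := \row_i (nth 0 [:: ct0 a0; ct0 a1; ct0 a2; cw0 a0; cw0 a1; cw0 a2] i).
suff -> : x = a *m Gm R L L L by exact: submxMl.
apply/rowP => j; rewrite !mxE sum6 !mxE /=.
have -> : x 0 j = Vx x (enum_val j).1 (enum_val j).2 by rewrite /Vx -surjective_pairing enum_valK.
case: (enum_val j) => [[c p] ax] /=.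
rewrite -/(Vc x c p ax) (V_vel hl hx) (rig_all hl hK hx) /vel.
rewrite /ct0 /cw0 /gfun /cX nc_org /=.
case: (ord3_cases ax) => [->|[->|->]]; rewrite /crs /=; ring.
Qed.

Lemma G_free : row_free (Gm R L L L).
Proof.
apply: inj_row_free => v hv.
pose c0 : cube L L L := (ord0, ord0, ord0).
have ev : forall (p : corner) ax, (v *m Gm R L L L) 0 (enum_rank ((c0, p), ax)) = 0.
  by move=> p ax; rewrite hv mxE.
have E := fun p ax => ev p ax.
move: (E (o0,o0,o0) a0) (E (o0,o0,o0) a1) (E (o0,o0,o0) a2) (E (o1,o0,o0) a1) (E (o1,o0,o0) a2) (E (o0,o1,o0) a2).
rewrite !mxE !sum6 !mxE !enum_rankK /gfun /crs /gX /gridpt /=.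
move=> h1 h2 h3 h4 h5 h6.
apply/rowP => i; rewrite mxE.
rewrite !add0n in h1 h2 h3 h4 h5 h6.
case: i => [[|[|[|[|[|[|//]]]]]] hi];
  match goal with |- context [@Ordinal 6 ?k ?h] =>
    rewrite (_ : @Ordinal 6 k h = @Ordinal 6 k isT); [lra|exact: val_inj] end.
Qed.

Lemma dof_Pat : dof l (Pat K) = 6%N.
Proof.
rewrite /dof (rank_from_kernel (G := Gm R L L L)) //.
- rewrite card_coord; have : (0 < L * L * L)%N by rewrite !muln_gt0. lia.
- exact: ker_span.
- apply: G_ker; exact: Pat_valid.
- exact: G_free.
Qed.

End Final.

Theorem theorem1 (R : realFieldType) (l : R) (hl : 0 < l) (L : nat) (hL : (2 <= L)%N) :
  is_delta3D l L L L (2 * L ^ 3 - 2)%N.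
Proof.
case: L hL => [|[|K]] // _.
have hK : (0 < K.+1)%N by [].
have e : (K.+2 ^ 3 = K.+2 * K.+2 * K.+2)%N by rewrite !expnS expn0 muln1 mulnA.
rewrite e.
split.
- exists (Pat K.+1); split; first exact: Pat_valid.
  have hd := dof_Pat hl hK.
  split; first exact: hd.
  have h1 := card_Pat_le K.+1.
  have h2 := lower_bound hd.
  move: h1 h2; set n := (K.+2 * K.+2 * K.+2)%N.
  have : (0 < n)%N by rewrite /n !muln_gt0.
  lia.
- by move=> P _ hr; exact: lower_bound hr.
Qed.
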